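(* Let $k\ge 2$ be an integer, let $k_0=\lfloor (k-1)/2\rfloor$ (the largest integer with $2k_0\le k-1$) and $k_1=\lfloor (k-2)/2\rfloor$ (the largest integer with $2k_1+2\le k$). Then there exist functions $f_k(\theta,\lambda)$ and $w_k^{2j+1}(s,\lambda)$ ($j=0,\dots,k_1$), each polynomial in $\lambda$, such that for all $\theta$ $$v_k(\theta)=f_k(\theta,\lambda)+\sum_{j=0}^{k_1}\lambda_{2j+1}\,w_k^{2j+1}(\sin\theta,\lambda),$$ where for every $\theta$ the polynomial $f_k(\theta,\cdot)$ belongs to the ideal $(\lambda_2,\lambda_4,\dots,\lambda_{2k_0})\subset\mathbb{R}[\lambda_1,\dots,\lambda_d]$ (the zero ideal if $k_0=0$), and $w_k^{2j+1}(0,\lambda)=0$ for all $\lambda$ and all $j$.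
   Context: Let $d\ge1$, let $\lambda=(\lambda_1,\dots,\lambda_d)$ be real parameters, and $p(x)=\sum_{i=1}^d\lambda_i x^i$. Consider the planar Liénard system $\dot x=y$, $\dot y=-x+p(x)y$. In polar coordinates $x=r\cos\theta$, $y=r\sin\theta$ its orbits satisfy $$\frac{dr}{d\theta}=\frac{r\,p(r\cos\theta)\sin^2\theta}{-1+\sin\theta\cos\theta\,p(r\cos\theta)}.$$ For small $r_0$ let $r(\theta;r_0)$ be the solution of this equation with $r(0;r_0)=r_0$. For each $\theta$, the map $r_0\mapsto r(\theta;r_0)$ is analytic near $0$ and tangent to the identity, and its inverse has the expansion $r_0=r+\sum_{k\ge2}v_k(\theta)r^k$ where $r=r(\theta;r_0)$; set $v_1(\theta)=1$. Each $v_k(\theta)$ is a polynomial in $\lambda$ with real coefficients depending on $\theta$. Convention: $\lambda_i=0$ for $i>d$. *)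

(* Defs.v *)
From Stdlib Require Import Reals Lra Lia Arith.
From Coquelicot Require Import Coquelicot.
Open Scope R_scope.

(* Parameters lambda = (lambda_1,...,lambda_d) are encoded as l : nat -> R
   with the convention lambda_i = 0 for i > d (and the unused index 0 set to 0). *)
Definition valid_params (d : nat) (l : nat -> R) : Prop :=
  forall i : nat, (i = 0%nat \/ (d < i)%nat) -> l i = 0.

Definition pL (d : nat) (l : nat -> R) (x : R) : R :=
  sum_n_m (fun i => l i * x ^ i) 1 d.

Definition denL (d : nat) (l : nat -> R) (t r : R) : R :=
  -1 + sin t * cos t * pL d l (r * cos t).

Definition rhsL (d : nat) (l : nat -> R) (t r : R) : R :=
  r * pL d l (r * cos t) * (sin t) ^ 2 / denL d l t r.

Definition is_polar_sol (d : nat) (l : nat -> R) (r0 theta : R) (r : R -> R) : Prop :=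
  r 0 = r0 /\
  forall t, Rmin 0 theta <= t <= Rmax 0 theta ->
    denL d l t (r t) <> 0 /\ is_derive r t (rhsL d l t (r t)).

(* v : nat -> R -> (nat -> R) -> R, v k theta lambda = v_k(theta) evaluated at lambda,
   is characterised by the inverse expansion
     r0 = r + sum_{k>=2} v_k(theta) r^k,  r = r(theta; r0),
   valid for all sufficiently small r0 (this determines v_k, k >= 2, uniquely). *)
Definition inverse_expansion (d : nat) (v : nat -> R -> (nat -> R) -> R) : Prop :=
  forall l, valid_params d l -> forall theta : R,
    exists delta, 0 < delta /\
      forall r0 (r : R -> R), Rabs r0 < delta -> is_polar_sol d l r0 theta r ->
        is_series (fun n => v (n + 2)%nat theta l * (r theta) ^ (n + 2)) (r0 - r theta).

Fixpoint prod_1_to (d : nat) (a : nat -> R) : R :=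
  match d with
  | O => 1
  | S d' => prod_1_to d' a * a (S d')
  end.

Definition is_poly_in (d : nat) (g : (nat -> R) -> R) : Prop :=
  exists (n : nat) (c : nat -> R) (e : nat -> nat -> nat),
    forall l, valid_params d l ->
      g l = sum_n (fun m => c m * prod_1_to d (fun i => l i ^ (e m i))) n.

Definition in_even_ideal (d k0 : nat) (f : (nat -> R) -> R) : Prop :=
  exists (g : nat -> (nat -> R) -> R),
    (forall i, is_poly_in d (g i)) /\
    forall l, valid_params d l ->
      f l = sum_n_m (fun i => l (2 * i)%nat * g i l) 1 k0.

(* Main.v *)
Require Import Defs.
From Stdlib Require Import Reals Lra Lia Arith List FunctionalExtensionality ZArith ClassicalEpsilon.
From Coquelicot Require Import Coquelicot.
Open Scope R_scope.

Definition mono (d : nat) (e : nat -> nat) (l : nat -> R) : R :=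
  prod_1_to d (fun i => l i ^ e i).

Lemma prod_1_to_S d a : prod_1_to (S d) a = prod_1_to d a * a (S d).
Proof. reflexivity. Qed.

Lemma prod_ext d a b : (forall i, (1 <= i <= d)%nat -> a i = b i) ->
  prod_1_to d a = prod_1_to d b.
Proof. induction d; intros H; [reflexivity|]. rewrite !prod_1_to_S.
  rewrite IHd by (intros; apply H; lia). rewrite (H (S d)) by lia. reflexivity. Qed.

Lemma prod_1 d : prod_1_to d (fun _ => 1) = 1.
Proof. induction d; [reflexivity|]. rewrite prod_1_to_S, IHd; ring. Qed.

Lemma mono_0 d l : mono d (fun _ => 0%nat) l = 1.
Proof. unfold mono. rewrite <- (prod_1 d). apply prod_ext. intros; reflexivity. Qed.

Lemma mono_add d e1 e2 l :
  mono d (fun i => (e1 i + e2 i)%nat) l = mono d e1 l * mono d e2 l.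
Proof. unfold mono; induction d; [simpl; ring|]. rewrite !prod_1_to_S, IHd, pow_add; ring. Qed.

Lemma mono_ext d e l l' : (forall i, (1 <= i <= d)%nat -> l i = l' i) ->
  mono d e l = mono d e l'.
Proof. intros H; unfold mono; apply prod_ext; intros i Hi; rewrite H; auto. Qed.

Definition dvar (i : nat) : nat -> nat := fun j => if Nat.eqb j i then 1%nat else 0%nat.

Lemma mono_var d i l : (1 <= i <= d)%nat -> mono d (dvar i) l = l i.
Proof. unfold mono, dvar; induction d; intros H; [lia|]. rewrite prod_1_to_S.
  destruct (Nat.eqb_spec (S d) i).
  - subst. rewrite (prod_ext d _ (fun _ => 1)), prod_1. simpl; ring.
    intros j Hj. destruct (Nat.eqb_spec j (S d)); [lia|]. reflexivity.
  - rewrite IHd by lia. simpl; ring.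
Qed.

Definition upd (l : nat -> R) (i : nat) : nat -> R :=
  fun j => if Nat.eqb j i then 0 else l j.

Definition dec (e : nat -> nat) (i : nat) : nat -> nat :=
  fun j => if Nat.eqb j i then (e j - 1)%nat else e j.

Lemma mono_upd_keep d e l i : (e i = 0%nat \/ ~ (1 <= i <= d)%nat) ->
  mono d e (upd l i) = mono d e l.
Proof. intros H; unfold mono; apply prod_ext; intros j Hj. unfold upd.
  destruct (Nat.eqb_spec j i); [|reflexivity]. subst. destruct H as [H|H]; [|lia].
  rewrite H; reflexivity. Qed.

Lemma mono_upd_kill d e l i : (1 <= i <= d)%nat -> (e i > 0)%nat ->
  mono d e (upd l i) = 0.
Proof. unfold mono; induction d; intros H1 H2; [lia|]. rewrite prod_1_to_S.
  destruct (Nat.eqb_spec (S d) i).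
  - subst. unfold upd. rewrite Nat.eqb_refl. destruct (e (S d)); [lia|]. simpl; ring.
  - rewrite IHd by lia; ring. Qed.

Lemma mono_dec d e l i : (1 <= i <= d)%nat -> (e i > 0)%nat ->
  mono d e l = l i * mono d (dec e i) l.
Proof. unfold mono, dec; induction d; intros H1 H2; [lia|]. rewrite !prod_1_to_S.
  destruct (Nat.eqb_spec (S d) i).
  - subst. rewrite (prod_ext d (fun i => l i ^ (if Nat.eqb i (S d) then _ else _))
       (fun i => l i ^ e i)).
    + destruct (e (S d)) eqn:E; [lia|]. simpl. replace (n - 0)%nat with n by lia. ring.
    + intros j Hj. destruct (Nat.eqb_spec j (S d)); [lia|reflexivity].
  - rewrite IHd by lia; ring. Qed.

Definition evl (d : nat) (L : list (R * (nat -> nat))) (l : nat -> R) : R :=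
  fold_right (fun ce acc => fst ce * mono d (snd ce) l + acc) 0 L.

Definition PL (d : nat) (g : (nat -> R) -> R) : Prop :=
  exists L, forall l, valid_params d l -> g l = evl d L l.

Lemma valid_upd d l i : valid_params d l -> valid_params d (upd l i).
Proof. intros H j Hj; unfold upd; destruct (Nat.eqb j i); auto. Qed.

Definition cnd (d i : nat) (e : nat -> nat) : bool :=
  (Nat.leb 1 i && Nat.leb i d && negb (Nat.eqb (e i) 0))%bool.

Lemma cnd_spec d i e : cnd d i e = true <-> ((1 <= i <= d)%nat /\ (e i > 0)%nat).
Proof. unfold cnd. rewrite !Bool.andb_true_iff, Bool.negb_true_iff, !Nat.leb_le, Nat.eqb_neq. lia. Qed.

Lemma cnd_false d i e : cnd d i e = false -> (e i = 0%nat \/ ~ (1 <= i <= d)%nat).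
Proof. intros H. destruct (Nat.eq_dec (e i) 0); [left; auto|right]. intros Hi.
  assert (cnd d i e = true) by (apply cnd_spec; lia). congruence. Qed.

Lemma PL_upd d g i : PL d g -> PL d (fun l => g (upd l i)).
Proof. intros [L HL]. exists (map (fun ce => if cnd d i (snd ce)
   then (0, snd ce) else ce) L).
  intros l Hl. rewrite HL by (apply valid_upd; auto). clear HL. induction L as [|[c e] L IH]; [reflexivity|].
  simpl. rewrite IH. f_equal. destruct (cnd d i e) eqn:E.
  - apply cnd_spec in E. rewrite mono_upd_kill by lia. simpl; ring.
  - apply cnd_false in E. rewrite mono_upd_keep by auto. reflexivity.
Qed.

Lemma PL_peel d g i : PL d g -> exists h, PL d h /\
  forall l, valid_params d l -> g l = g (upd l i) + l i * h l.
Proof. intros [L HL].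
  exists (evl d (flat_map (fun ce => if cnd d i (snd ce)
   then (fst ce, dec (snd ce) i) :: nil else nil) L)). split.
  - eexists; intros; reflexivity.
  - intros l Hl. rewrite !HL by (try apply valid_upd; auto). clear HL.
    induction L as [|[c e] L IH]; [simpl; ring|]. simpl. rewrite IH.
    destruct (cnd d i e) eqn:E; simpl.
    + apply cnd_spec in E. rewrite mono_upd_kill by lia. rewrite (mono_dec d e l i) by lia. simpl; ring.
    + apply cnd_false in E. rewrite mono_upd_keep by auto. ring.
Qed.

Lemma PL_ext d g g' : (forall l, valid_params d l -> g l = g' l) -> PL d g' -> PL d g.
Proof. intros H [L HL]; exists L; intros; rewrite H, HL; auto. Qed.

Lemma PL_zero d : PL d (fun _ => 0).
Proof. exists nil; reflexivity. Qed.

Lemma sum_n_cons (f : nat -> R) n : sum_n f (S n) = f 0%nat + sum_n (fun k => f (S k)) n.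
Proof. rewrite !sum_n_Reals. induction n. simpl; ring.
  rewrite tech5, IHn. simpl. ring. Qed.

Lemma PL_is_poly d g : PL d g -> is_poly_in d g.
Proof. intros [L HL]. exists (length L), (fun m => fst (nth m L (0, fun _ => 0%nat))),
  (fun m => snd (nth m L (0, fun _ => 0%nat))). intros l Hl. rewrite HL by auto. clear HL.
  induction L as [|[c e] L IH].
  - simpl. rewrite sum_n_Reals. simpl. ring.
  - simpl length. rewrite sum_n_cons. simpl. rewrite IH. reflexivity.
Qed.

Fixpoint ZE (m : nat) (l : nat -> R) : nat -> R :=
  match m with O => l | S m' => upd (ZE m' l) (2 * S m') end.
Fixpoint ZO (m : nat) (l : nat -> R) : nat -> R :=
  match m with O => l | S m' => upd (ZO m' l) (2 * m' + 1) end.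

Lemma ZE_keep m l j : (forall i, (1 <= i <= m)%nat -> j <> (2 * i)%nat) -> ZE m l j = l j.
Proof. induction m; intros H; [reflexivity|]. change (ZE (S m) l) with (upd (ZE m l) (2 * S m)). unfold upd.
  destruct (Nat.eqb_spec j (2 * S m)). exfalso; apply (H (S m)); lia. apply IHm; intros; apply H; lia. Qed.

Lemma ZE_kill m l i : (1 <= i <= m)%nat -> ZE m l (2 * i) = 0.
Proof. induction m; intros H; [lia|]. change (ZE (S m) l) with (upd (ZE m l) (2 * S m)). unfold upd.
  destruct (Nat.eqb_spec (2 * i) (2 * S m)); [reflexivity|]. apply IHm; lia. Qed.

Lemma ZO_keep m l j : (forall i, (i < m)%nat -> j <> (2 * i + 1)%nat) -> ZO m l j = l j.
Proof. induction m; intros H; [reflexivity|]. change (ZO (S m) l) with (upd (ZO m l) (2 * m + 1)). unfold upd.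
  destruct (Nat.eqb_spec j (2 * m + 1)). exfalso; apply (H m); lia. apply IHm; intros; apply H; lia. Qed.

Lemma ZO_kill m l i : (i < m)%nat -> ZO m l (2 * i + 1) = 0.
Proof. induction m; intros H; [lia|]. change (ZO (S m) l) with (upd (ZO m l) (2 * m + 1)). unfold upd.
  destruct (Nat.eqb_spec (2 * i + 1) (2 * m + 1)); [reflexivity|]. apply IHm; lia. Qed.

Lemma upd_comm l i j : upd (upd l i) j = upd (upd l j) i.
Proof. apply functional_extensionality; intros x; unfold upd.
  destruct (Nat.eqb x i), (Nat.eqb x j); reflexivity. Qed.
Lemma ZE_upd m l i : ZE m (upd l i) = upd (ZE m l) i.
Proof. induction m; [reflexivity|]. change (ZE (S m) (upd l i)) with (upd (ZE m (upd l i)) (2 * S m)).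
  rewrite IHm, upd_comm; reflexivity. Qed.
Lemma ZO_upd m l i : ZO m (upd l i) = upd (ZO m l) i.
Proof. induction m; [reflexivity|]. change (ZO (S m) (upd l i)) with (upd (ZO m (upd l i)) (2 * m + 1)).
  rewrite IHm, upd_comm; reflexivity. Qed.

Lemma valid_ZE d m l : valid_params d l -> valid_params d (ZE m l).
Proof. induction m; intros; simpl; auto. apply valid_upd; auto. Qed.
Lemma valid_ZO d m l : valid_params d l -> valid_params d (ZO m l).
Proof. induction m; intros; simpl; auto. apply valid_upd; auto. Qed.

Lemma PL_ZE d g m : PL d g -> PL d (fun l => g (ZE m l)).
Proof. revert g; induction m; intros g H; auto.
  apply (IHm (fun l => g (upd l (2 * S m)))). apply PL_upd; auto. Qed.
Lemma PL_ZO d g m : PL d g -> PL d (fun l => g (ZO m l)).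
Proof. revert g; induction m; intros g H; auto.
  apply (IHm (fun l => g (upd l (2 * m + 1)))). apply PL_upd; auto. Qed.

Lemma tele_E d g m : PL d g -> exists G : nat -> (nat -> R) -> R,
  (forall i, PL d (G i)) /\ forall l, valid_params d l ->
   g l = g (ZE m l) + sum_n_m (fun i => l (2 * i)%nat * G i l) 1 m.
Proof. intros Hg. induction m.
  - exists (fun _ _ => 0). split. intros; apply PL_zero. intros l Hl.
    rewrite sum_n_m_zero by lia. simpl. unfold zero; simpl; ring.
  - destruct IHm as [G [HG HE]].
    destruct (PL_peel d _ (2 * S m) (PL_ZE d g m Hg)) as [h [Hh Hp]].
    exists (fun i => if Nat.eqb i (S m) then h else G i). split.
    + intros i; destruct (Nat.eqb i (S m)); auto.
    + intros l Hl. pose proof (Hp l Hl) as Hp'. cbv beta in Hp'. rewrite (HE l Hl), Hp'.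
      rewrite sum_n_Sm by lia. rewrite Nat.eqb_refl. change (ZE (S m) l) with (upd (ZE m l) (2 * S m)).
      rewrite (sum_n_m_ext_loc (fun i => l (2 * i)%nat * (if Nat.eqb i (S m) then h else G i) l) (fun i => l (2 * i)%nat * G i l)).
      rewrite ZE_upd. unfold plus; simpl; ring.
      intros k Hk. destruct (Nat.eqb_spec k (S m)); [lia|reflexivity].
Qed.

Lemma tele_O d g m : PL d g -> exists W : nat -> (nat -> R) -> R,
  (forall j, PL d (W j)) /\ forall l, valid_params d l ->
   g l = g (ZO (S m) l) + sum_n (fun j => l (2 * j + 1)%nat * W j l) m.
Proof. intros Hg. induction m.
  - destruct (PL_peel d g 1 Hg) as [h [Hh Hp]].
    exists (fun _ => h). split; auto. intros l Hl. rewrite (Hp l Hl).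
    rewrite sum_O. simpl ZO. reflexivity.
  - destruct IHm as [G [HG HE]].
    destruct (PL_peel d _ (2 * S m + 1) (PL_ZO d g (S m) Hg)) as [h [Hh Hp]].
    exists (fun i => if Nat.eqb i (S m) then h else G i). split.
    + intros i; destruct (Nat.eqb i (S m)); auto.
    + intros l Hl. pose proof (Hp l Hl) as Hp'. cbv beta in Hp'. rewrite (HE l Hl), Hp'.
      rewrite sum_Sn. rewrite Nat.eqb_refl. 
      replace (ZO (S (S m)) l) with (upd (ZO (S m) l) (2 * S m + 1)) by reflexivity.
      unfold sum_n. rewrite (sum_n_m_ext_loc (fun i => l (2 * i + 1)%nat * (if Nat.eqb i (S m) then h else G i) l) (fun i => l (2 * i + 1)%nat * G i l)).
      rewrite ZO_upd. unfold plus; simpl; ring.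
      intros k Hk. destruct (Nat.eqb_spec k (S m)); [lia|reflexivity].
Qed.

Lemma ex_RInt_cont (f : R -> R) a b : (forall t, continuous f t) -> ex_RInt f a b.
Proof. intros H; apply (ex_RInt_continuous (V := R_CompleteNormedModule)); intros; apply H. Qed.

Lemma RInt_plusR (f g : R -> R) a b : (forall t, continuous f t) -> (forall t, continuous g t) ->
  RInt (fun x => f x + g x) a b = RInt f a b + RInt g a b.
Proof. intros Hf Hg. exact (RInt_plus f g a b (ex_RInt_cont f a b Hf) (ex_RInt_cont g a b Hg)). Qed.

Lemma RInt_minusR (f g : R -> R) a b : (forall t, continuous f t) -> (forall t, continuous g t) ->
  RInt (fun x => f x - g x) a b = RInt f a b - RInt g a b.
Proof. intros Hf Hg. exact (RInt_minus f g a b (ex_RInt_cont f a b Hf) (ex_RInt_cont g a b Hg)). Qed.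

Lemma RInt_scalR (f : R -> R) a b c : (forall t, continuous f t) ->
  RInt (fun x => f x * c) a b = RInt f a b * c.
Proof. intros Hf. pose proof (RInt_scal f a b c (ex_RInt_cont f a b Hf)) as E.
  unfold scal in E; simpl in E; unfold mult in E; simpl in E. rewrite Rmult_comm, <- E.
  apply (RInt_ext (V := R_CompleteNormedModule)); intros; apply Rmult_comm. Qed.

Lemma RInt_derive0 (f : R -> R) t : (forall t, continuous f t) ->
  is_derive (fun x => RInt f 0 x) t (f t).
Proof. intros H. apply (is_derive_RInt (V := R_CompleteNormedModule)) with (a := 0). apply filter_forall. intros; apply RInt_correct, ex_RInt_cont; auto. apply H. Qed.

Lemma RInt_cont0 (f : R -> R) t : (forall t, continuous f t) -> continuous (fun x => RInt f 0 x) t.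
Proof. intros H. apply (ex_derive_continuous (K := R_AbsRing) (V := R_NormedModule) (fun x => RInt f 0 x)). eexists; apply RInt_derive0; auto. Qed.

Lemma cont_plus (f g : R -> R) t : continuous f t -> continuous g t -> continuous (fun x => f x + g x) t.
Proof. intros; apply (continuous_plus f g); auto. Qed.
Lemma cont_mult (f g : R -> R) t : continuous f t -> continuous g t -> continuous (fun x => f x * g x) t.
Proof. intros; apply (continuous_mult f g); auto. Qed.
Lemma cont_const (c t : R) : continuous (fun _ => c) t.
Proof. apply continuous_const. Qed.
Lemma cont_id (t : R) : continuous (fun x => x) t.
Proof. apply continuous_id. Qed.
Lemma cont_pt (f : R -> R) t : continuity_pt f t -> continuous f t.
Proof. intros H; apply continuity_pt_filterlim; auto. Qed.
Lemma cont_pt' (f : R -> R) t : continuous f t -> continuity_pt f t.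
Proof. intros H; apply continuity_pt_filterlim; auto. Qed.
Lemma cont_sin (t : R) : continuous sin t.
Proof. apply cont_pt, continuity_sin. Qed.
Lemma cont_cos (t : R) : continuous cos t.
Proof. apply cont_pt, continuity_cos. Qed.
Lemma cont_comp (f g : R -> R) t : continuous f t -> continuous g (f t) -> continuous (fun x => g (f x)) t.
Proof. intros; apply (continuous_comp f g); auto. Qed.
Lemma cont_pow (f : R -> R) n t : continuous f t -> continuous (fun x => f x ^ n) t.
Proof. intros H; induction n; simpl. apply cont_const. apply cont_mult; auto. Qed.
Lemma cont_ext (f g : R -> R) (t : R) : (forall x, f x = g x) -> continuous f t -> continuous g t.
Proof. intros H1 H2; apply (continuous_ext f g); auto. Qed.

Lemma cont_sum (G : nat -> R -> R) a b (t : R) : (forall p, (a <= p <= b)%nat -> continuous (G p) t) ->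
  continuous (fun x => sum_n_m (fun p => G p x) a b) t.
Proof. intros H. induction b.
  - destruct a. apply (cont_ext (G 0%nat)). intros; rewrite sum_n_n; reflexivity. apply H; lia.
    apply (cont_ext (fun _ => 0)). intros; rewrite sum_n_m_zero by lia; reflexivity. apply cont_const.
  - destruct (le_lt_dec a (S b)).
    + destruct (Nat.eq_dec a (S b)). subst. apply (cont_ext (G (S b))). intros; rewrite sum_n_n; reflexivity. apply H; lia.
      apply (cont_ext (fun x => sum_n_m (fun p => G p x) a b + G (S b) x)). intros; rewrite sum_n_Sm by lia; reflexivity.
      apply (cont_plus (fun x => sum_n_m (fun p => G p x) a b)). apply IHb; intros; apply H; lia. apply H; lia.
    + apply (cont_ext (fun _ => 0)). intros; rewrite sum_n_m_zero by lia; reflexivity. apply cont_const.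
Qed.

Definition evt (d : nat) (L : list ((R -> R) * (nat -> nat))) (l : nat -> R) (t : R) : R :=
  fold_right (fun ce acc => fst ce t * mono d (snd ce) l + acc) 0 L.

Definition PT (d : nat) (g : (nat -> R) -> R -> R) : Prop :=
  exists L, (forall ce, In ce L -> forall t, continuous (fst ce) t) /\
    forall l, valid_params d l -> forall t, g l t = evt d L l t.

Lemma evt_app d L1 L2 l t : evt d (L1 ++ L2) l t = evt d L1 l t + evt d L2 l t.
Proof. induction L1; simpl; [ring|]. rewrite IHL1; ring. Qed.

Lemma evt_cont d L l t : (forall ce, In ce L -> forall t, continuous (fst ce) t) -> continuous (evt d L l) t.
Proof. intros H; induction L as [|ce L IH]; simpl. apply cont_const.
  apply (cont_plus (fun x => fst ce x * mono d (snd ce) l)). apply cont_mult. apply H; simpl; auto. apply cont_const.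
  apply IH; intros; apply H; simpl; auto. Qed.

Lemma PT_ext d g g' : (forall l, valid_params d l -> forall t, g l t = g' l t) -> PT d g' -> PT d g.
Proof. intros H [L [HL1 HL2]]; exists L; split; auto. intros; rewrite H, HL2; auto. Qed.

Lemma PT_fun d (phi : R -> R) : (forall t, continuous phi t) -> PT d (fun _ t => phi t).
Proof. intros H. exists ((phi, fun _ => 0%nat) :: nil). split.
  intros ce [<-|[]]; auto. intros l Hl t; simpl. rewrite mono_0; ring. Qed.

Lemma PT_var d i : PT d (fun l _ => l i).
Proof. destruct (le_dec 1 i) as [H1|H1]; [destruct (le_dec i d) as [H2|H2]|].
  - exists ((fun _ => 1, dvar i) :: nil). split. intros ce [<-|[]]; intros; apply cont_const.
    intros l Hl t; simpl. rewrite mono_var by lia; ring.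
  - exists nil. split. intros _ []. intros l Hl t; simpl. apply Hl; lia.
  - exists nil. split. intros _ []. intros l Hl t; simpl. apply Hl; lia.
Qed.

Lemma PT_plus d g1 g2 : PT d g1 -> PT d g2 -> PT d (fun l t => g1 l t + g2 l t).
Proof. intros [L1 [H1 E1]] [L2 [H2 E2]]. exists (L1 ++ L2). split.
  intros ce Hce; apply in_app_or in Hce as [|]; auto.
  intros l Hl t; rewrite evt_app, E1, E2; auto. Qed.

Definition pmul1 (a : (R -> R) * (nat -> nat)) (b : (R -> R) * (nat -> nat)) :=
  (fun t => fst a t * fst b t, fun i => (snd a i + snd b i)%nat).

Lemma evt_map_mul d a L l t : evt d (map (pmul1 a) L) l t = fst a t * mono d (snd a) l * evt d L l t.
Proof. induction L as [|b L IH]; simpl; [ring|]. rewrite IH, mono_add; ring. Qed.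

Lemma PT_mult d g1 g2 : PT d g1 -> PT d g2 -> PT d (fun l t => g1 l t * g2 l t).
Proof. intros [L1 [H1 E1]] [L2 [H2 E2]]. exists (flat_map (fun a => map (pmul1 a) L2) L1). split.
  - intros ce Hce. apply in_flat_map in Hce as [a [Ha Hb]]. apply in_map_iff in Hb as [b [<- Hb]].
    intros t; simpl. apply cont_mult; auto.
  - intros l Hl t; rewrite E1, E2 by auto. clear E1 E2 H1. induction L1 as [|a L1 IH]; simpl; [ring|].
    rewrite evt_app, evt_map_mul, <- IH. ring.
Qed.

Lemma PT_sum d (G : nat -> (nat -> R) -> R -> R) a b :
  (forall p, (a <= p <= b)%nat -> PT d (G p)) -> PT d (fun l t => sum_n_m (fun p => G p l t) a b).
Proof. intros H. induction b.
  - destruct a. apply (PT_ext _ _ (G 0%nat)). intros; rewrite sum_n_n; reflexivity. apply H; lia.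
    apply (PT_ext _ _ (fun _ _ => 0)). intros; rewrite sum_n_m_zero by lia; reflexivity. apply (PT_fun d (fun _ => 0)); intros; apply cont_const.
  - destruct (le_lt_dec a (S b)).
    + destruct (Nat.eq_dec a (S b)). subst. apply (PT_ext _ _ (G (S b))). intros; rewrite sum_n_n; reflexivity. apply H; lia.
      apply (PT_ext _ _ (fun l t => sum_n_m (fun p => G p l t) a b + G (S b) l t)). intros; rewrite sum_n_Sm by lia; reflexivity.
      apply (PT_plus d (fun l t => sum_n_m (fun p => G p l t) a b)). apply IHb; intros; apply H; lia. apply H; lia.
    + apply (PT_ext _ _ (fun _ _ => 0)). intros; rewrite sum_n_m_zero by lia; reflexivity. apply (PT_fun d (fun _ => 0)); intros; apply cont_const.
Qed.

Lemma PT_int d g : PT d g -> PT d (fun l t => RInt (fun s => g l s) 0 t).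
Proof. intros [L [H E]]. exists (map (fun ce => (fun t => RInt (fst ce) 0 t, snd ce)) L). split.
  - intros ce Hce. apply in_map_iff in Hce as [a [<- Ha]]. intros t; simpl. apply RInt_cont0; auto.
  - intros l Hl t. rewrite (RInt_ext _ (evt d L l)) by (intros; apply E; auto). clear E.
    induction L as [|a L IH].
    + change (evt d nil l) with (fun _ : R => 0). rewrite RInt_const. unfold scal; simpl; unfold mult; simpl; ring.
    + change (evt d (a :: L) l) with (fun x => fst a x * mono d (snd a) l + evt d L l x). simpl map. 
      change (evt d (_ :: map _ L) l t) with (RInt (fst a) 0 t * mono d (snd a) l + evt d (map (fun ce => (fun t => RInt (fst ce) 0 t, snd ce)) L) l t).
      assert (Ha : forall t, continuous (fst a) t) by (intros; apply H; simpl; auto).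
      assert (HL : forall ce, In ce L -> forall t, continuous (fst ce) t) by (intros; apply H; simpl; auto).
      rewrite (RInt_plusR (fun x => fst a x * mono d (snd a) l) (evt d L l)).
      rewrite RInt_scalR by auto. rewrite IH by auto. reflexivity.
      intros; apply cont_mult; auto; apply cont_const.
      intros; apply evt_cont; auto.
Qed.

Lemma PT_cont d g l t : PT d g -> valid_params d l -> continuous (g l) t.
Proof. intros [L [H E]] Hl. eapply continuous_ext. intros; symmetry; apply E; auto. apply evt_cont; auto. Qed.

Lemma PT_PL d g t : PT d g -> PL d (fun l => g l t).
Proof. intros [L [H E]]. exists (map (fun ce => (fst ce t, snd ce)) L). intros l Hl. rewrite E by auto.
  clear. induction L; simpl; auto. rewrite IHL; reflexivity. Qed.

Lemma sumR_ext_loc (a b : nat -> R) n m : (forall k, (n <= k <= m)%nat -> a k = b k) ->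
  sum_n_m a n m = sum_n_m b n m.
Proof. intros H; apply sum_n_m_ext_loc; auto. Qed.

Definition pi_ (l : nat -> R) (t : R) (p : nat) : R := l p * cos t ^ p.

Definition sigT (T : nat -> (R -> R) * (R -> R)) (t : R) (j : nat) : R :=
  sin t * cos t * fst (T j) t + sin t ^ 2 * INR j * snd (T j) t.

Fixpoint tab (l : nat -> R) (n : nat) : nat -> (R -> R) * (R -> R) :=
  match n with
  | O => fun _ => (fun _ => 0, fun _ => 0)
  | S n' => fun j => if Nat.leb j n' then tab l n' j else
      ((fun t => sum_n_m (fun p => pi_ l t p * sigT (tab l n') t (S n' - p)) 1 (S n')),
       (fun t => (if Nat.eqb (S n') 1 then 1 else 0) +
          RInt (fun s => sum_n_m (fun p => pi_ l s p * sigT (tab l n') s (S n' - p)) 1 (S n')) 0 t))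
  end.

Definition A (l : nat -> R) (k : nat) : R -> R := fst (tab l k k).
Definition U (l : nat -> R) (k : nat) : R -> R := snd (tab l k k).
Definition Sig (l : nat -> R) (t : R) (j : nat) : R :=
  sin t * cos t * A l j t + sin t ^ 2 * INR j * U l j t.

Lemma tab_le l n j : (j <= n)%nat -> tab l n j = tab l j j.
Proof. induction n; intros H. assert (j = 0%nat) by lia; subst; reflexivity.
  cbn [tab]. destruct (Nat.leb_spec j n). apply IHn; auto. assert (j = S n) by lia. subst.
  cbn [tab]. destruct (Nat.leb_spec (S n) n); [lia|]. reflexivity. Qed.

Lemma A_0 l t : A l 0 t = 0.
Proof. reflexivity. Qed.
Lemma U_0 l t : U l 0 t = 0.
Proof. reflexivity. Qed.

Lemma tab_S l n : tab l (S n) (S n) =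
  ((fun t => sum_n_m (fun p => pi_ l t p * sigT (tab l n) t (S n - p)) 1 (S n)),
       (fun t => (if Nat.eqb (S n) 1 then 1 else 0) +
          RInt (fun s => sum_n_m (fun p => pi_ l s p * sigT (tab l n) s (S n - p)) 1 (S n)) 0 t)).
Proof. cbn [tab]. destruct (Nat.leb_spec (S n) n); [lia|]. reflexivity. Qed.

Lemma A_rec l k t : A l k t = sum_n_m (fun p => pi_ l t p * Sig l t (k - p)) 1 k.
Proof. destruct k. rewrite sum_n_m_zero by lia. reflexivity.
  unfold A at 1. rewrite tab_S. cbn [fst]. apply sum_n_m_ext_loc. intros p Hp.
  unfold sigT, Sig, A, U. rewrite (tab_le l k (S k - p)) by lia. reflexivity. Qed.

Lemma U_rec l k t : U l k t = (if Nat.eqb k 1 then 1 else 0) + RInt (A l k) 0 t.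
Proof. destruct k. unfold U, A; simpl. rewrite RInt_const. unfold scal; simpl; unfold mult; simpl; ring.
  unfold U at 1. rewrite tab_S. cbn [snd]. f_equal. apply RInt_ext. intros x _.
  rewrite (A_rec l (S k) x). apply sum_n_m_ext_loc. intros p Hp.
  unfold sigT, Sig, A, U. rewrite (tab_le l k (S k - p)) by lia. reflexivity. Qed.

Lemma PT_AU d k : PT d (fun l t => A l k t) /\ PT d (fun l t => U l k t).
Proof. induction k as [k IH] using lt_wf_ind.
  assert (HA : PT d (fun l t => A l k t)).
  { apply (PT_ext _ _ (fun l t => sum_n_m (fun p => pi_ l t p * Sig l t (k - p)) 1 k)).
    intros; apply A_rec. apply PT_sum. intros p Hp. apply PT_mult.
    - unfold pi_. apply (PT_mult d (fun l _ => l p) (fun _ t => cos t ^ p)). apply PT_var.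
      apply PT_fun. intros; apply cont_pow, cont_cos.
    - destruct (IH (k - p)%nat) as [H1 H2]; [lia|]. unfold Sig.
      apply (PT_plus d (fun l t => sin t * cos t * A l (k - p) t)).
      + apply (PT_mult d (fun _ t => sin t * cos t)). apply PT_fun; intros; apply cont_mult; [apply cont_sin|apply cont_cos]. auto.
      + apply (PT_mult d (fun _ t => sin t ^ 2 * INR (k - p))). apply PT_fun; intros; apply cont_mult; [apply cont_pow, cont_sin|apply cont_const]. auto. }
  split; auto. apply (PT_ext _ _ (fun l t => (if Nat.eqb k 1 then 1 else 0) + RInt (fun s => A l k s) 0 t)).
  intros; apply U_rec. apply (PT_plus d (fun _ _ => if Nat.eqb k 1 then 1 else 0)).
  apply PT_fun; intros; apply cont_const. apply (PT_int d (fun l t => A l k t)); auto.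
Qed.

Lemma A_cont d l k t : valid_params d l -> continuous (A l k) t.
Proof. intros Hl. apply (PT_cont d (fun l t => A l k t)); auto. apply PT_AU. Qed.

Lemma U_deriv d l k t : valid_params d l -> is_derive (U l k) t (A l k t).
Proof. intros Hl. apply (is_derive_ext (fun x => (if Nat.eqb k 1 then 1 else 0) + RInt (A l k) 0 x)).
  intros; symmetry; apply U_rec.
  pose proof (is_derive_const (K := R_AbsRing) (V := R_NormedModule) (if Nat.eqb k 1 then 1 else 0) t) as H1.
  assert (H2 : is_derive (fun x => RInt (A l k) 0 x) t (A l k t)) by (apply RInt_derive0; intros; eapply A_cont; eauto).
  pose proof (is_derive_plus _ _ _ _ _ H1 H2) as H3.
  replace (A l k t) with (plus (zero : R_NormedModule) (A l k t)) by (unfold plus, zero; simpl; ring).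
  exact H3. Qed.

Lemma U_cont d l k t : valid_params d l -> continuous (U l k) t.
Proof. intros Hl. apply (ex_derive_continuous (K := R_AbsRing) (V := R_NormedModule) (U l k)).
  eexists; eapply U_deriv; eauto. Qed.

Lemma U_at0 l k : k <> 1%nat -> U l k 0 = 0.
Proof. intros H. rewrite U_rec. destruct (Nat.eqb_spec k 1); [lia|]. rewrite RInt_point. unfold zero; simpl; ring. Qed.

Lemma A_1 l t : A l 1 t = 0.
Proof. rewrite A_rec. rewrite sum_n_n. simpl. unfold Sig; rewrite A_0, U_0. simpl; ring. Qed.

Lemma U_1 l t : U l 1 t = 1.
Proof. rewrite U_rec. simpl. rewrite (RInt_ext _ (fun _ => 0)) by (intros; apply A_1).
  rewrite RInt_const. unfold scal; simpl; unfold mult; simpl; ring. Qed.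

Lemma sum_zero_loc (a : nat -> R) n m : (forall k, (n <= k <= m)%nat -> a k = 0) -> sum_n_m a n m = 0.
Proof. intros H. rewrite (sum_n_m_ext_loc a (fun _ => 0)) by auto.
  apply (sum_n_m_const_zero (G := R_AbelianMonoid)). Qed.

Lemma AU_vanish l k : (forall i, (1 <= i < k)%nat -> l i = 0) ->
  forall j t, (j <= k)%nat -> A l j t = 0 /\ (j <> 1%nat -> U l j t = 0).
Proof. intros H j t Hj.
  assert (HA : forall j t, (j <= k)%nat -> A l j t = 0).
  { intros j' t' Hj'. rewrite A_rec. apply sum_zero_loc.
    intros p Hp. destruct (Nat.eq_dec p j').
    - subst. rewrite Nat.sub_diag. unfold Sig. rewrite A_0, U_0. simpl; ring.
    - unfold pi_. rewrite H by lia. ring. }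
  split; auto. intros Hj1. rewrite U_rec. destruct (Nat.eqb_spec j 1); [lia|].
  rewrite (RInt_ext _ (fun _ => 0)) by (intros; apply HA; auto).
  rewrite RInt_const. unfold scal; simpl; unfold mult; simpl; ring.
Qed.

Lemma dR_plus (f g : R -> R) (x a b : R) : is_derive f x a -> is_derive g x b -> is_derive (fun y => f y + g y) x (a + b).
Proof. intros H1 H2; apply is_derive_Reals; apply is_derive_Reals in H1; apply is_derive_Reals in H2.
  exact (derivable_pt_lim_plus f g x a b H1 H2). Qed.
Lemma dR_minus (f g : R -> R) (x a b : R) : is_derive f x a -> is_derive g x b -> is_derive (fun y => f y - g y) x (a - b).
Proof. intros H1 H2; apply is_derive_Reals; apply is_derive_Reals in H1; apply is_derive_Reals in H2.
  exact (derivable_pt_lim_minus f g x a b H1 H2). Qed.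
Lemma dR_mult (f g : R -> R) (x a b : R) : is_derive f x a -> is_derive g x b -> is_derive (fun y => f y * g y) x (a * g x + f x * b).
Proof. intros H1 H2; apply is_derive_Reals; apply is_derive_Reals in H1; apply is_derive_Reals in H2.
  exact (derivable_pt_lim_mult f g x a b H1 H2). Qed.
Lemma dR_comp (f g : R -> R) (x a b : R) : is_derive g x b -> is_derive f (g x) a -> is_derive (fun y => f (g y)) x (a * b).
Proof. intros H1 H2; apply is_derive_Reals; apply is_derive_Reals in H1; apply is_derive_Reals in H2.
  exact (derivable_pt_lim_comp g f x b a H1 H2). Qed.
Lemma dR_const (c x : R) : is_derive (fun _ => c) x 0.
Proof. apply is_derive_Reals, derivable_pt_lim_const. Qed.
Lemma dR_id (x : R) : is_derive (fun y => y) x 1.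
Proof. apply is_derive_Reals, derivable_pt_lim_id. Qed.
Lemma dR_ext (f g : R -> R) (x a : R) : (forall y, f y = g y) -> is_derive f x a -> is_derive g x a.
Proof. intros H1 H2. apply (is_derive_ext f g); auto. Qed.
Lemma dR_eq (f : R -> R) (x a b : R) : a = b -> is_derive f x a -> is_derive f x b.
Proof. intros ->; auto. Qed.

Lemma deriv_cont_pt (f : R -> R) (x a : R) : is_derive f x a -> continuity_pt f x.
Proof. intros H. apply cont_pt'. apply (ex_derive_continuous (K := R_AbsRing) (V := R_NormedModule) f).
  eexists; eauto. Qed.

Lemma deriv0_const (f : R -> R) : (forall t, is_derive f t 0) -> forall a b, f a = f b.
Proof. intros H a b. destruct (MVT_gen f a b (fun _ => 0)) as [c [_ Hc]].
  intros; auto. intros; eapply deriv_cont_pt; eauto. lra. Qed.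

Lemma cos_2PI t : cos (t + 2 * PI) = cos t.
Proof. rewrite <- (cos_period t 1). f_equal. simpl; ring. Qed.
Lemma sin_2PI t : sin (t + 2 * PI) = sin t.
Proof. rewrite <- (sin_period t 1). f_equal. simpl; ring. Qed.
Lemma cos_PI_m t : cos (PI - t) = - cos t.
Proof. apply Rtrigo_facts.cos_pi_minus. Qed.

Lemma pow_opp_odd x m : (- x) ^ (2 * m + 1) = - x ^ (2 * m + 1).
Proof. induction m. simpl; ring. replace (2 * S m + 1)%nat with (2 + (2 * m + 1))%nat by lia.
  rewrite (pow_add (-x) 2 (2*m+1)), (pow_add x 2 (2*m+1)), IHm. ring. Qed.

Lemma sum_opp (f : nat -> R) n m : sum_n_m (fun p => - f p) n m = - sum_n_m f n m.
Proof. pose proof (sum_n_m_mult_l (K := R_Ring) (-1) f n m) as E. unfold mult in E; simpl in E.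
  set (X := sum_n_m f n m) in *. replace (- X) with (-1 * X) by ring.
  etransitivity; [|exact E]. apply sum_n_m_ext; intros; simpl; ring. Qed.

Section Sym.
Variables (d : nat) (l : nat -> R) (k : nat).
Hypothesis Hl : valid_params d l.
Hypothesis Hev : forall i, (1 <= i < k)%nat -> Nat.even i = true -> l i = 0.

Lemma sym_all : forall j, (j <= k)%nat ->
  (forall t, A l j (PI - t) = - A l j t) /\ (forall t, U l j (PI - t) = U l j t) /\
  (forall t, A l j (t + 2 * PI) = A l j t) /\ (forall t, U l j (t + 2 * PI) = U l j t).
Proof.
  intros j; induction j as [j IH] using lt_wf_ind; intros Hj.
  assert (HSig : forall m t, (m < j)%nat -> Sig l (PI - t) m = Sig l t m /\ Sig l (t + 2 * PI) m = Sig l t m).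
  { intros m t Hm. destruct (IH m Hm ltac:(lia)) as [H1 [H2 [H3 H4]]]. unfold Sig.
    rewrite H1, H2, H3, H4, sin_PI_x, cos_PI_m, sin_2PI, cos_2PI. split; ring. }
  assert (HA1 : forall t, A l j (PI - t) = - A l j t).
  { intros t. rewrite !A_rec, <- sum_opp. apply sumR_ext_loc. intros p Hp.
    rewrite (proj1 (HSig (j - p)%nat t ltac:(lia))). unfold pi_. rewrite cos_PI_m.
    destruct (Nat.Even_or_Odd p) as [[m Hm]|[m Hm]].
    - destruct (Nat.eq_dec p j).
      + replace (j - p)%nat with 0%nat by lia. unfold Sig. rewrite A_0, U_0. ring.
      + rewrite Hev. ring. lia. subst; apply Nat.even_spec; exists m; reflexivity.
    - subst p. rewrite pow_opp_odd. ring. }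
  assert (HA2 : forall t, A l j (t + 2 * PI) = A l j t).
  { intros t. rewrite !A_rec. apply sumR_ext_loc. intros p Hp.
    rewrite (proj2 (HSig (j - p)%nat t ltac:(lia))). unfold pi_. rewrite cos_2PI. reflexivity. }
  assert (HU1 : forall t, U l j (PI - t) = U l j t).
  { set (g := fun t => U l j (PI - t) - U l j t).
    assert (Hg : forall t, is_derive g t 0).
    { intros t. unfold g. apply (dR_eq _ _ (A l j (PI - t) * (0 - 1) - A l j t)).
      rewrite HA1; ring. apply dR_minus.
      apply (dR_comp (U l j) (fun x => PI - x)). apply dR_minus. apply dR_const. apply dR_id.
      eapply U_deriv; eauto. eapply U_deriv; eauto. }
    assert (E := deriv0_const g Hg 0 PI). unfold g in E.
    replace (PI - 0) with PI in E by ring. replace (PI - PI) with 0 in E by ring.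
    intros t. pose proof (deriv0_const g Hg t 0) as E2. unfold g in E2.
    replace (PI - 0) with PI in E2 by ring. lra. }
  assert (HU2 : forall t, U l j (t + 2 * PI) = U l j t).
  { set (g := fun t => U l j (t + 2 * PI) - U l j t).
    assert (Hg : forall t, is_derive g t 0).
    { intros t. unfold g. apply (dR_eq _ _ (A l j (t + 2 * PI) * (1 + 0) - A l j t)).
      rewrite HA2; ring. apply dR_minus.
      apply (dR_comp (U l j) (fun x => x + 2 * PI)). apply dR_plus. apply dR_id. apply dR_const.
      eapply U_deriv; eauto. eapply U_deriv; eauto. }
    assert (E := deriv0_const g Hg 0 (- PI)). unfold g in E.
    assert (E1 := HU1 0). assert (E2 := HU1 (- PI)).
    replace (PI - 0) with PI in E1 by ring. replace (PI - - PI) with (0 + 2 * PI) in E2 by ring.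
    replace (- PI + 2 * PI) with PI in E by ring.
    intros t. pose proof (deriv0_const g Hg t 0) as E3. unfold g in E3. lra. }
  auto.
Qed.

End Sym.

Lemma per_nat (f : R -> R) : (forall t, f (t + 2 * PI) = f t) -> forall n t, f (t + 2 * PI * INR n) = f t.
Proof. intros H n; induction n; intros t. simpl. f_equal; ring.
  rewrite S_INR. replace (t + 2 * PI * (INR n + 1)) with ((t + 2 * PI * INR n) + 2 * PI) by ring.
  rewrite H; auto. Qed.

Lemma per_Z (f : R -> R) : (forall t, f (t + 2 * PI) = f t) -> forall (m : Z) t, f (t - 2 * PI * IZR m) = f t.
Proof. intros H m t. destruct (Z_le_gt_dec 0 m).
  - rewrite <- (Z2Nat.id m) by lia. rewrite <- INR_IZR_INZ.
    rewrite <- (per_nat f H (Z.to_nat m) (t - 2 * PI * INR (Z.to_nat m))). f_equal; ring.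
  - replace m with (- Z.of_nat (Z.to_nat (- m)))%Z by lia. rewrite opp_IZR, <- INR_IZR_INZ.
    replace (t - 2 * PI * - INR (Z.to_nat (- m))) with (t + 2 * PI * INR (Z.to_nat (- m))) by ring.
    apply per_nat; auto.
Qed.

Lemma sym_asin (f : R -> R) : (forall t, f (t + 2 * PI) = f t) -> (forall t, f (PI - t) = f t) ->
  forall t, f t = f (asin (sin t)).
Proof. intros Hp Hr t.
  set (m := (up ((t + PI / 2) / (2 * PI)) - 1)%Z).
  assert (HPI := PI_RGT_0).
  destruct (archimed ((t + PI / 2) / (2 * PI))) as [H1 H2].
  assert (Hm : IZR m <= (t + PI / 2) / (2 * PI) < IZR m + 1).
  { unfold m. rewrite minus_IZR. lra. }
  set (t' := t - 2 * PI * IZR m).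
  assert (Ht' : - (PI / 2) <= t' < 3 * PI / 2).
  { unfold t'. destruct Hm as [Hm1 Hm2].
    apply Rmult_le_compat_r with (r := 2 * PI) in Hm1; [|lra].
    apply Rmult_lt_compat_r with (r := 2 * PI) in Hm2; [|lra].
    unfold Rdiv in Hm1, Hm2. rewrite Rmult_assoc, Rinv_l, Rmult_1_r in Hm1, Hm2 by lra. nra. }
  assert (Hs : sin t' = sin t) by (apply per_Z; intros; apply sin_2PI).
  assert (Hf : f t' = f t) by (apply per_Z; auto).
  rewrite <- Hs, <- Hf. destruct (Rle_dec t' (PI / 2)).
  - rewrite asin_sin by lra. reflexivity.
  - rewrite <- (sin_PI_x t'). rewrite asin_sin by lra. rewrite Hr. reflexivity.
Qed.

Lemma cont_eps (f : R -> R) x : (forall eps, 0 < eps -> exists del, 0 < del /\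
  forall y, Rabs (y - x) < del -> Rabs (f y - f x) < eps) -> continuous f x.
Proof. intros H. apply cont_pt. intros eps Heps. destruct (H eps Heps) as [del [Hd H2]].
  exists del; split; auto. intros y [_ Hy]. apply H2. exact Hy. Qed.

Lemma cont_eps' (f : R -> R) x : continuous f x -> forall eps, 0 < eps -> exists del, 0 < del /\
  forall y, Rabs (y - x) < del -> Rabs (f y - f x) < eps.
Proof. intros H. apply cont_pt' in H. intros eps Heps. destruct (H eps Heps) as [del [Hd H2]].
  exists del; split; auto. intros y Hy. destruct (Req_dec y x) as [->|Hne]. replace (f x - f x) with 0 by ring; rewrite Rabs_R0; auto.
  apply (H2 y). split. split. unfold no_cond; auto. auto. exact Hy. Qed.

Lemma d_pow_scaled (c K : R) (m : nat) x :
  is_derive (fun s => c * s ^ m / K) x (c * (INR m * x ^ pred m) / K).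
Proof. apply is_derive_Reals.
  apply (derivable_pt_lim_ext (mult_real_fct (c / K) (fun s => s ^ m))). intros; unfold mult_real_fct, Rdiv; ring.
  replace (c * (INR m * x ^ pred m) / K) with (c / K * (INR m * x ^ pred m)) by (unfold Rdiv; ring).
  apply derivable_pt_lim_scal. apply derivable_pt_lim_pow. Qed.

Lemma RInt_bound_seg (f : R -> R) a b M : (forall t, continuous f t) ->
  (forall s, Rmin a b <= s <= Rmax a b -> Rabs (f s) <= M) -> Rabs (RInt f a b) <= M * Rabs (b - a).
Proof. intros Hc H. destruct (Rle_dec a b).
  - rewrite Rmin_left, Rmax_right in H by lra. rewrite (Rabs_right (b - a)) by lra.
    rewrite Rmult_comm. apply abs_RInt_le_const; [lra| apply ex_RInt_cont; auto | auto].
  - rewrite Rmin_right, Rmax_left in H by lra. rewrite (Rabs_left (b - a)) by lra.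
    rewrite <- (opp_RInt_swap f b a) by (apply ex_RInt_cont; auto).
    change (Rabs (- RInt f b a) <= M * - (b - a)). rewrite Rabs_Ropp.
    replace (M * - (b - a)) with ((a - b) * M) by ring. apply abs_RInt_le_const; [lra| apply ex_RInt_cont; auto | auto].
Qed.

Lemma RInt_chasles0 (f : R -> R) s t : (forall t, continuous f t) ->
  RInt f 0 s - RInt f 0 t = RInt f t s.
Proof. intros H. rewrite <- (RInt_Chasles f 0 t s) by (apply ex_RInt_cont; auto).
  unfold plus; simpl; ring. Qed.

Lemma RInt_pow (c : R) m t : RInt (fun s => c * s ^ m) 0 t = c * t ^ (S m) / INR (S m).
Proof. assert (HS : 0 < INR (S m)) by (apply lt_0_INR; lia).
  remember (INR (S m)) as K eqn:HK.
  apply is_RInt_unique.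
  replace (c * t ^ S m / K) with (minus (c * t ^ S m / K) (c * 0 ^ S m / K))
    by (unfold minus, plus, opp; simpl; field; lra).
  apply (is_RInt_derive (fun s => c * s ^ S m / K)).
  - intros x _. eapply dR_eq; [|apply d_pow_scaled]. rewrite <- HK. simpl pred. field. lra.
  - intros; apply cont_mult. apply cont_const. apply cont_pow, cont_id.
Qed.

Lemma RInt_pow_neg (c : R) m t : RInt (fun s => c * (- s) ^ m) t 0 = c * (- t) ^ (S m) / INR (S m).
Proof. assert (HS : 0 < INR (S m)) by (apply lt_0_INR; lia).
  remember (INR (S m)) as K eqn:HK.
  apply is_RInt_unique.
  replace (c * (- t) ^ S m / K) with (minus (- c * (- 0) ^ S m / K) (- c * (- t) ^ S m / K))
    by (unfold minus, plus, opp; simpl; field; lra).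
  apply (is_RInt_derive (fun s => - c * (- s) ^ S m / K)).
  - intros x _. apply (dR_eq _ _ ((- c * (INR (S m) * (- x) ^ pred (S m)) / K) * (0 - 1))).
    rewrite <- HK. simpl pred. field. lra.
    apply (dR_comp (fun u => - c * u ^ S m / K) (fun s => - s)).
    apply (dR_ext (fun s => 0 - s)). intros; ring. apply dR_minus. apply dR_const. apply dR_id.
    apply d_pow_scaled.
  - intros; apply cont_mult. apply cont_const. apply cont_pow.
    apply (cont_ext (fun s => 0 - s)). intros; ring. apply (cont_plus (fun _ => 0) (fun s => - s)). apply cont_const.
    apply (cont_ext (fun s => -1 * s)). intros; ring. apply cont_mult; [apply cont_const|apply cont_id].
Qed.

Lemma Int_bound (f : R -> R) c m t : (forall s, continuous f s) -> 0 <= c ->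
  (forall s, Rabs (f s) <= c * Rabs s ^ m) -> Rabs (RInt f 0 t) <= c * Rabs t ^ (S m) / INR (S m).
Proof. intros Hc Hc0 H. assert (HS : 0 < INR (S m)) by (apply lt_0_INR; lia).
  assert (Hcf : forall s, continuous (fun x => Rabs (f x)) s).
  { intros s; apply (cont_comp f Rabs); auto. apply cont_pt, Rcontinuity_abs. }
  destruct (Rle_dec 0 t).
  - eapply Rle_trans. apply abs_RInt_le; auto. apply ex_RInt_cont; auto.
    eapply Rle_trans. apply (RInt_le _ (fun s => c * s ^ m)); auto. apply ex_RInt_cont; auto.
    apply ex_RInt_cont; intros; apply cont_mult. apply cont_const. apply cont_pow, cont_id.
    intros x Hx. replace (x ^ m) with (Rabs x ^ m) by (rewrite (Rabs_right x) by lra; reflexivity). auto.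
    rewrite RInt_pow. rewrite (Rabs_right t) by lra. lra.
  - rewrite <- (opp_RInt_swap f t 0) by (apply ex_RInt_cont; auto).
    change (Rabs (- RInt f t 0) <= c * Rabs t ^ S m / INR (S m)). rewrite Rabs_Ropp.
    eapply Rle_trans. apply abs_RInt_le; auto. lra. apply ex_RInt_cont; auto.
    eapply Rle_trans. apply (RInt_le _ (fun s => c * (- s) ^ m)); auto. lra. apply ex_RInt_cont; auto.
    apply ex_RInt_cont; intros; apply cont_mult. apply cont_const. apply cont_pow.
    apply (cont_ext (fun s => -1 * s)). intros; ring. apply cont_mult; [apply cont_const|apply cont_id].
    intros x Hx. replace ((- x) ^ m) with (Rabs x ^ m) by (rewrite (Rabs_left x) by lra; reflexivity). auto.
    rewrite RInt_pow_neg. rewrite (Rabs_left t) by lra. lra.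
Qed.

Lemma pm_cancel (x a b : R) : x + a - (x + b) = a - b.
Proof. ring. Qed.
Lemma pm_cancel0 (x a : R) : x + a - x = a.
Proof. ring. Qed.

Section Picard.
Variables (G : R -> R -> R) (B L x0 : R).
Hypothesis HB : forall t x, Rabs (G t x) <= B.
Hypothesis HL : forall t x y, Rabs (G t x - G t y) <= L * Rabs (x - y).
Hypothesis HC : forall x t, continuous (fun s => G s x) t.

Lemma B_nonneg : 0 <= B.
Proof. eapply Rle_trans; [apply Rabs_pos|apply (HB 0 0)]. Qed.
Lemma L_nonneg : 0 <= L.
Proof. pose proof (HL 0 1 0). pose proof (Rabs_pos (G 0 1 - G 0 0)).
  replace (Rabs (1 - 0)) with 1 in H by (rewrite Rminus_0_r, Rabs_R1; reflexivity). lra. Qed.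

Lemma compG_cont (y : R -> R) : (forall t, continuous y t) -> forall t, continuous (fun s => G s (y s)) t.
Proof. intros Hy t. apply cont_eps. intros eps Heps.
  pose proof L_nonneg as HL0.
  destruct (cont_eps' _ _ (HC (y t) t) (eps / 2)) as [d1 [Hd1 H1]]; [lra|].
  destruct (cont_eps' _ _ (Hy t) (eps / 2 / (L + 1))) as [d2 [Hd2 H2]].
  { apply Rdiv_lt_0_compat; lra. }
  exists (Rmin d1 d2). split. apply Rmin_glb_lt; auto.
  intros s Hs. pose proof (H1 s ltac:(eapply Rlt_le_trans; [exact Hs| apply Rmin_l])) as E1.
  pose proof (H2 s ltac:(eapply Rlt_le_trans; [exact Hs| apply Rmin_r])) as E2.
  pose proof (HL s (y s) (y t)) as E3.
  replace (G s (y s) - G t (y t)) with ((G s (y s) - G s (y t)) + (G s (y t) - G t (y t))) by ring.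
  eapply Rle_lt_trans. apply Rabs_triang.
  assert (L * Rabs (y s - y t) <= eps / 2).
  { apply Rle_trans with ((L + 1) * (eps / 2 / (L + 1))). apply Rmult_le_compat; try lra. apply Rabs_pos.
    right; field; lra. }
  lra.
Qed.

Fixpoint pic (n : nat) : R -> R :=
  match n with O => fun _ => x0 | S n' => fun t => x0 + RInt (fun s => G s (pic n' s)) 0 t end.

Lemma pic_cont n t : continuous (pic n) t.
Proof. revert t; induction n; intros t. apply cont_const. simpl.
  apply (cont_plus (fun _ => x0) (fun t => RInt (fun s => G s (pic n s)) 0 t)). apply cont_const.
  apply RInt_cont0. apply compG_cont; auto. Qed.

Lemma pic_lip n s t : Rabs (pic n s - pic n t) <= B * Rabs (s - t).
Proof. pose proof B_nonneg. destruct n. simpl. rewrite Rminus_eq_0, Rabs_R0. apply Rmult_le_pos; auto; apply Rabs_pos.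
  simpl. rewrite pm_cancel.
  rewrite RInt_chasles0 by (apply compG_cont, pic_cont).
  apply RInt_bound_seg. apply compG_cont, pic_cont. intros; auto. Qed.

Lemma pic_diff n t : Rabs (pic (S n) t - pic n t) <= B * L ^ n * Rabs t ^ (S n) / INR (fact (S n)).
Proof. pose proof B_nonneg. pose proof L_nonneg. revert t; induction n; intros t.
  - simpl pic. rewrite pm_cancel0.
    eapply Rle_trans. apply (Int_bound _ B 0). intros; apply compG_cont; intros; apply cont_const. auto.
    intros s; simpl; rewrite Rmult_1_r; auto. simpl. lra.
  - change (pic (S (S n)) t - pic (S n) t) with
      ((x0 + RInt (fun s => G s (pic (S n) s)) 0 t) - (x0 + RInt (fun s => G s (pic n s)) 0 t)).
    rewrite pm_cancel.
    rewrite <- RInt_minusR by (apply compG_cont, pic_cont).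
    assert (HF : 0 < INR (fact (S n))) by (apply lt_0_INR, lt_O_fact).
    eapply Rle_trans. apply (Int_bound _ (B * L ^ S n / INR (fact (S n))) (S n)).
    + intros; apply (cont_plus (fun s => G s (pic (S n) s)) (fun s => - G s (pic n s))).
      apply compG_cont, pic_cont. apply (cont_ext (fun s => -1 * G s (pic n s))). intros; ring.
      apply cont_mult. apply cont_const. apply compG_cont, pic_cont.
    + apply Rmult_le_pos. apply Rmult_le_pos; auto. apply pow_le; auto. left; apply Rinv_0_lt_compat; auto.
    + intros s. eapply Rle_trans. apply HL.
      apply Rle_trans with (L * (B * L ^ n * Rabs s ^ S n / INR (fact (S n)))).
      apply Rmult_le_compat_l; [lra| apply IHn].
      right. rewrite <- (tech_pow_Rmult L n). field. lra.
    + right. assert (0 < INR (S (S n))) by (apply lt_0_INR; lia). rewrite (fact_simpl (S n)), mult_INR. field. split; lra.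
Qed.


Lemma half_pow_le N n : (N <= n)%nat -> (/2) ^ n <= (/2) ^ N.
Proof. intros H. induction H. lra. simpl. pose proof (pow_le (/2) m ltac:(lra)). lra. Qed.

Lemma half_pow_small e : 0 < e -> exists N, (/2) ^ N < e.
Proof. intros He. destruct (pow_lt_1_zero (/2) ltac:(rewrite Rabs_right; lra) e He) as [N HN].
  exists N. specialize (HN N (le_n N)). rewrite Rabs_right in HN; auto. apply Rle_ge, pow_le; lra. Qed.

Lemma fin_bound (u : nat -> R) N : exists C, forall n, (n < N)%nat -> Rabs (u n) <= C.
Proof. induction N. exists 0; intros; lia. destruct IHN as [C HCx]. exists (Rmax C (Rabs (u N))).
  intros n Hn. destruct (Nat.eq_dec n N). subst; apply Rmax_r. eapply Rle_trans; [apply HCx; lia|apply Rmax_l]. Qed.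

Lemma cv_bounded (u : nat -> R) : Un_cv u 0 -> exists C, forall n, Rabs (u n) <= C.
Proof. intros H. destruct (H 1 ltac:(lra)) as [N HN]. destruct (fin_bound u N) as [C HCx].
  exists (Rmax C 1). intros n. destruct (le_lt_dec N n).
  - specialize (HN n l). unfold R_dist in HN. rewrite Rminus_0_r in HN. eapply Rle_trans; [left; exact HN|apply Rmax_r].
  - eapply Rle_trans; [apply HCx; auto|apply Rmax_l]. Qed.

Lemma pic_geo tau : 0 <= tau -> exists C, 0 <= C /\ forall n t, Rabs t <= tau -> Rabs (pic (S n) t - pic n t) <= C * (/2) ^ n.
Proof. intros Htau. pose proof B_nonneg as HB0. pose proof L_nonneg as HL0.
  destruct (cv_bounded _ (cv_speed_pow_fact (2 * L * tau))) as [C0 HC0].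
  exists (B * tau * C0). split. apply Rmult_le_pos. apply Rmult_le_pos; auto. eapply Rle_trans; [apply Rabs_pos|apply (HC0 0%nat)].
  intros n t Ht. eapply Rle_trans. apply pic_diff.
  assert (HF : 0 < INR (fact n)) by (apply lt_0_INR, lt_O_fact).
  assert (HF1 : INR (fact n) <= INR (fact (S n))).
  { rewrite fact_simpl, mult_INR. rewrite <- (Rmult_1_l (INR (fact n))) at 1. apply Rmult_le_compat_r; [lra|].
    rewrite S_INR. pose proof (pos_INR n). lra. }
  assert (Hq : 0 <= (2 * L * tau) ^ n / INR (fact n)) by (apply Rdiv_le_0_compat; auto; apply pow_le; nra).
  specialize (HC0 n). rewrite Rabs_right in HC0 by lra.
  apply Rle_trans with (B * tau * ((2 * L * tau) ^ n / INR (fact n)) * (/ 2) ^ n).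
  - replace (B * tau * ((2 * L * tau) ^ n / INR (fact n)) * (/ 2) ^ n) with (B * (L * tau) ^ n * tau / INR (fact n)).
    2:{ replace (2 * L * tau) with (2 * (L * tau)) by ring. rewrite (Rpow_mult_distr 2 (L * tau) n).
        replace ((/2) ^ n) with (/ (2 ^ n)) by (rewrite pow_inv; reflexivity). field. repeat split; try (apply pow_nonzero); lra. }
    rewrite Rpow_mult_distr. simpl (Rabs t ^ S n).
    unfold Rdiv. apply Rmult_le_compat.
    + apply Rmult_le_pos. apply Rmult_le_pos; auto. apply pow_le; auto. apply Rmult_le_pos; apply Rabs_pos || apply pow_le, Rabs_pos.
    + left; apply Rinv_0_lt_compat. apply lt_0_INR, lt_O_fact.
    + replace (B * L ^ n * (Rabs t * Rabs t ^ n)) with (B * L ^ n * Rabs t ^ n * Rabs t) by ring.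
      apply Rmult_le_compat; auto. apply Rmult_le_pos; [apply Rmult_le_pos; auto; apply pow_le; auto|apply pow_le, Rabs_pos].
      apply Rabs_pos. rewrite Rmult_assoc. apply Rmult_le_compat_l; auto. apply Rmult_le_compat_l. apply pow_le; auto.
      apply pow_incr; split; auto; apply Rabs_pos.
    + apply Rinv_le_contravar; auto.
  - apply Rmult_le_compat_r. apply pow_le; lra. apply Rmult_le_compat_l; auto. apply Rmult_le_pos; auto.
Qed.

Lemma pic_cauchy tau C : (forall n t, Rabs t <= tau -> Rabs (pic (S n) t - pic n t) <= C * (/2) ^ n) ->
  forall n p t, Rabs t <= tau -> Rabs (pic (n + p) t - pic n t) <= 2 * C * (/2) ^ n - 2 * C * (/2) ^ (n + p).
Proof. intros H n p t Ht. induction p.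
  - rewrite Nat.add_0_r, Rminus_eq_0, Rabs_R0. lra.
  - replace (pic (n + S p) t - pic n t) with ((pic (S (n + p)) t - pic (n + p) t) + (pic (n + p) t - pic n t))
      by (rewrite Nat.add_succ_r; ring).
    eapply Rle_trans. apply Rabs_triang. pose proof (H (n + p)%nat t Ht).
    rewrite Nat.add_succ_r. replace ((/2) ^ (S (n + p))) with (/2 * (/2) ^ (n + p)) by reflexivity. lra.
Qed.

Definition ylim (t : R) : R := real (Lim_seq (fun n => pic n t)).

Lemma ylim_close tau : 0 <= tau -> exists C, 0 <= C /\ forall n t, Rabs t <= tau ->
  is_lim_seq (fun n => pic n t) (ylim t) /\ Rabs (ylim t - pic n t) <= 2 * C * (/2) ^ n.
Proof. intros Htau. destruct (pic_geo tau Htau) as [C [HC0 HCc]]. exists C; split; auto.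
  pose proof (pic_cauchy tau C HCc) as Hc.
  assert (Hc' : forall n m t, (n <= m)%nat -> Rabs t <= tau -> Rabs (pic m t - pic n t) <= 2 * C * (/2) ^ n).
  { intros n m t Hnm Ht. replace m with (n + (m - n))%nat by lia. eapply Rle_trans. apply Hc; auto.
    pose proof (pow_le (/2) (n + (m - n)) ltac:(lra)). nra. }
  intros n t Ht.
  assert (Hl : is_lim_seq (fun n => pic n t) (ylim t)).
  { apply Lim_seq_correct'. apply ex_lim_seq_cauchy_corr. intros eps.
    destruct (half_pow_small (eps / (2 * C + 1))) as [N HN]. apply Rdiv_lt_0_compat; [apply cond_pos|lra].
    exists N. intros a b Ha Hb.
    assert (2 * C * (/2) ^ N < eps).
    { apply Rmult_lt_compat_l with (r := 2 * C + 1) in HN; [|lra]. unfold Rdiv in HN.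
      rewrite <- Rmult_assoc, (Rmult_comm (2 * C + 1) eps), Rmult_assoc, Rinv_r, Rmult_1_r in HN by lra.
      pose proof (pow_le (/2) N ltac:(lra)). nra. }
    destruct (le_lt_dec a b).
    - rewrite Rabs_minus_sym. eapply Rle_lt_trans; [apply Hc'; auto|].
      pose proof (half_pow_le N a Ha). nra.
    - eapply Rle_lt_trans; [apply Hc'; auto; lia|].
      pose proof (half_pow_le N b Hb). nra. }
  split; auto.
  apply Rle_plus_epsilon. intros eps Heps. apply is_lim_seq_Reals in Hl.
  destruct (Hl eps Heps) as [N HN]. specialize (HN (max N n) (Nat.le_max_l N n)). unfold R_dist in HN.
  replace (ylim t - pic n t) with (- (pic (max N n) t - ylim t) + (pic (max N n) t - pic n t)) by ring.
  eapply Rle_trans. apply Rabs_triang. rewrite Rabs_Ropp. pose proof (Hc' n (max N n) t (Nat.le_max_r N n) Ht). lra.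
Qed.

Lemma small_arg (a K : R) : 0 <= K -> (forall n : nat, a <= K * (/2) ^ n) -> a <= 0.
Proof. intros HK H. apply Rle_plus_epsilon. intros eps Heps.
  destruct (half_pow_small (eps / (K + 1))) as [N HN]. apply Rdiv_lt_0_compat; lra.
  specialize (H N). apply Rmult_lt_compat_l with (r := K + 1) in HN; [|lra]. unfold Rdiv in HN.
  rewrite <- Rmult_assoc, (Rmult_comm (K + 1) eps), Rmult_assoc, Rinv_r, Rmult_1_r in HN by lra.
  pose proof (pow_le (/2) N ltac:(lra)). nra. Qed.

Lemma ylim_lip s t : Rabs (ylim s - ylim t) <= B * Rabs (s - t).
Proof. destruct (ylim_close (Rmax (Rabs s) (Rabs t))) as [C [HC0 HCc]]. eapply Rle_trans; [apply Rabs_pos|apply Rmax_l].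
  assert (Hs : Rabs s <= Rmax (Rabs s) (Rabs t)) by apply Rmax_l.
  assert (Ht : Rabs t <= Rmax (Rabs s) (Rabs t)) by apply Rmax_r.
  cut (Rabs (ylim s - ylim t) - B * Rabs (s - t) <= 0). lra.
  apply (small_arg _ (4 * C)). lra. intros n.
  assert (E : Rabs (ylim s - ylim t) <= Rabs (ylim s - pic n s) + Rabs (pic n s - pic n t) + Rabs (ylim t - pic n t)).
  { replace (ylim s - ylim t) with ((ylim s - pic n s) + (pic n s - pic n t) + (-(ylim t - pic n t))) by ring.
    eapply Rle_trans; [apply Rabs_triang|]. rewrite Rabs_Ropp.
    pose proof (Rabs_triang (ylim s - pic n s) (pic n s - pic n t)). lra. }
  pose proof (proj2 (HCc n s Hs)). pose proof (proj2 (HCc n t Ht)). pose proof (pic_lip n s t). lra.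
Qed.

Lemma ylim_cont t : continuous ylim t.
Proof. apply cont_eps. intros eps Heps. pose proof B_nonneg. exists (eps / (B + 1)). split. apply Rdiv_lt_0_compat; lra.
  intros y Hy. eapply Rle_lt_trans. apply ylim_lip.
  pose proof (Rabs_pos (y - t)).
  apply Rle_lt_trans with ((B + 1) * Rabs (y - t)). nra.
  replace eps with ((B + 1) * (eps / (B + 1))) by (field; lra). apply Rmult_lt_compat_l; lra. Qed.

Lemma ylim_int t : ylim t = x0 + RInt (fun s => G s (ylim s)) 0 t.
Proof. destruct (ylim_close (Rabs t)) as [C [HC0 HCc]]. apply Rabs_pos.
  pose proof L_nonneg.
  assert (Hd : Rabs (ylim t - (x0 + RInt (fun s => G s (ylim s)) 0 t)) <= 0).
  { apply (small_arg _ (2 * C + L * 2 * C * Rabs t)). pose proof (Rabs_pos t). assert (0 <= L * 2 * C * Rabs t) by (repeat apply Rmult_le_pos; lra). lra. intros n.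
    replace (ylim t - (x0 + RInt (fun s => G s (ylim s)) 0 t)) with
      ((ylim t - pic (S n) t) + (RInt (fun s => G s (pic n s)) 0 t - RInt (fun s => G s (ylim s)) 0 t))
      by (simpl; ring).
    eapply Rle_trans. apply Rabs_triang.
    rewrite <- RInt_minusR by (apply compG_cont; first [apply pic_cont | apply ylim_cont]).
    pose proof (proj2 (HCc (S n) t (Rle_refl _))).
    assert (Rabs (RInt (fun x => G x (pic n x) - G x (ylim x)) 0 t) <= (L * (2 * C * (/2) ^ n)) * Rabs (t - 0)).
    { apply RInt_bound_seg. intros; apply (cont_plus (fun s => G s (pic n s)) (fun s => - G s (ylim s))).
      apply compG_cont, pic_cont. apply (cont_ext (fun s => -1 * G s (ylim s))). intros; ring.
      apply cont_mult. apply cont_const. apply compG_cont, ylim_cont.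
      intros s Hs. eapply Rle_trans. apply HL. apply Rmult_le_compat_l; auto.
      rewrite Rabs_minus_sym. apply HCc.
      destruct (Rle_dec 0 t). rewrite Rmin_left, Rmax_right in Hs by lra. rewrite !Rabs_right by lra. lra.
      rewrite Rmin_right, Rmax_left in Hs by lra. rewrite (Rabs_left t) by lra. unfold Rabs; destruct (Rcase_abs s); lra. }
    rewrite Rminus_0_r in H1. simpl pow in H0.
    pose proof (pow_le (/2) n ltac:(lra)). nra. }
  pose proof (Rabs_pos (ylim t - (x0 + RInt (fun s => G s (ylim s)) 0 t))) as Hp.
  assert (Hz : Rabs (ylim t - (x0 + RInt (fun s => G s (ylim s)) 0 t)) = 0) by lra.
  apply Rabs_eq_0 in Hz. lra.
Qed.

Theorem picard : exists y : R -> R, y 0 = x0 /\ (forall t, is_derive y t (G t (y t))) /\ forall t, Rabs (y t - x0) <= B * Rabs t.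
Proof. exists ylim. assert (Hb : forall t, Rabs (ylim t - x0) <= B * Rabs t).
  { intros t. rewrite ylim_int. rewrite pm_cancel0.
    replace (Rabs t) with (Rabs (t - 0)) by (rewrite Rminus_0_r; reflexivity).
    apply RInt_bound_seg. apply compG_cont, ylim_cont. intros; apply HB. }
  split; [|split; auto].
  - pose proof (Hb 0) as H0. rewrite Rabs_R0, Rmult_0_r in H0. pose proof (Rabs_pos (ylim 0 - x0)).
    assert (Hz : Rabs (ylim 0 - x0) = 0) by lra. apply Rabs_eq_0 in Hz. lra.
  - intros t. apply (dR_ext (fun t => x0 + RInt (fun s => G s (ylim s)) 0 t)). intros; symmetry; apply ylim_int.
    apply (dR_eq _ _ (0 + G t (ylim t))). ring. apply dR_plus. apply dR_const.
    apply (RInt_derive0 (fun s => G s (ylim s))). apply compG_cont, ylim_cont.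
Qed.

End Picard.

Lemma sum1S (f : nat -> R) d : sum_n_m f 1 (S d) = sum_n_m f 1 d + f (S d).
Proof. rewrite sum_n_Sm by lia. reflexivity. Qed.
Lemma sum10 (f : nat -> R) : sum_n_m f 1 0 = 0.
Proof. rewrite sum_n_m_zero by lia. reflexivity. Qed.

Definition Lam (d : nat) (l : nat -> R) := sum_n_m (fun i => Rabs (l i)) 1 d.
Definition Lam' (d : nat) (l : nat -> R) := sum_n_m (fun i => INR i * Rabs (l i)) 1 d.

Lemma Lam_pos d l : 0 <= Lam d l.
Proof. unfold Lam; induction d. rewrite sum10; lra. rewrite sum1S. pose proof (Rabs_pos (l (S d))). lra. Qed.
Lemma Lam'_pos d l : 0 <= Lam' d l.
Proof. unfold Lam'; induction d. rewrite sum10; lra. rewrite sum1S. pose proof (Rabs_pos (l (S d))).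
  pose proof (pos_INR (S d)). nra. Qed.

Lemma pow_le1 (a : R) n : 0 <= a <= 1 -> a ^ n <= 1.
Proof. intros H. rewrite <- (pow1 n). apply pow_incr; lra. Qed.

Lemma pow_abs_le (x : R) i : Rabs x <= 1 -> (1 <= i)%nat -> Rabs (x ^ i) <= Rabs x.
Proof. intros H Hi. rewrite <- RPow_abs. destruct i; [lia|]. replace (Rabs x ^ S i) with (Rabs x * Rabs x ^ i) by reflexivity.
  pose proof (pow_le1 (Rabs x) i ltac:(split; auto; apply Rabs_pos)). pose proof (Rabs_pos x). nra. Qed.

Lemma pow_diff_le (x y : R) i : Rabs x <= 1 -> Rabs y <= 1 -> Rabs (x ^ i - y ^ i) <= INR i * Rabs (x - y).
Proof. intros Hx Hy. induction i. simpl. rewrite Rminus_eq_0, Rabs_R0; lra.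
  replace (x ^ S i - y ^ S i) with (x * (x ^ i - y ^ i) + y ^ i * (x - y)) by (simpl; ring).
  eapply Rle_trans. apply Rabs_triang. rewrite !Rabs_mult, S_INR.
  assert (Rabs (y ^ i) <= 1) by (rewrite <- RPow_abs; apply pow_le1; split; auto; apply Rabs_pos).
  pose proof (Rabs_pos (x ^ i - y ^ i)). pose proof (Rabs_pos (x - y)). pose proof (Rabs_pos x).
  pose proof (Rabs_pos (y ^ i)). nra. Qed.

Lemma pL_bound d l x : Rabs x <= 1 -> Rabs (pL d l x) <= Lam d l * Rabs x.
Proof. intros Hx. unfold pL, Lam. induction d. rewrite !sum10, Rabs_R0; lra.
  rewrite !sum1S. eapply Rle_trans. apply Rabs_triang. rewrite Rabs_mult.
  pose proof (pow_abs_le x (S d) Hx ltac:(lia)). pose proof (Rabs_pos (l (S d))). nra. Qed.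

Lemma pL_lip d l x y : Rabs x <= 1 -> Rabs y <= 1 -> Rabs (pL d l x - pL d l y) <= Lam' d l * Rabs (x - y).
Proof. intros Hx Hy. unfold pL, Lam'. induction d. rewrite !sum10, Rminus_eq_0, Rabs_R0. lra.
  rewrite !sum1S. replace (sum_n_m (fun i => l i * x ^ i) 1 d + l (S d) * x ^ S d -
    (sum_n_m (fun i => l i * y ^ i) 1 d + l (S d) * y ^ S d)) with
    ((sum_n_m (fun i => l i * x ^ i) 1 d - sum_n_m (fun i => l i * y ^ i) 1 d) + l (S d) * (x ^ S d - y ^ S d)) by ring.
  eapply Rle_trans. apply Rabs_triang. rewrite Rabs_mult.
  pose proof (pow_diff_le x y (S d) Hx Hy). pose proof (Rabs_pos (l (S d))). nra. Qed.

Lemma pL_cont d l (c : R) t : continuous (fun t => pL d l (c * cos t)) t.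
Proof. unfold pL. apply (cont_sum (fun i t => l i * (c * cos t) ^ i)). intros p _.
  apply cont_mult. apply cont_const. apply cont_pow. apply cont_mult. apply cont_const. apply cont_cos. Qed.

Lemma abs_cos_mul (x t : R) : Rabs (x * cos t) <= Rabs x.
Proof. rewrite Rabs_mult. pose proof (COS_bound t). assert (Rabs (cos t) <= 1) by (apply Rabs_le; lra).
  pose proof (Rabs_pos x). pose proof (Rabs_pos (cos t)). nra. Qed.

Lemma abs_sin_le (t : R) : Rabs (sin t) <= 1.
Proof. pose proof (SIN_bound t). apply Rabs_le; lra. Qed.
Lemma abs_cos_le (t : R) : Rabs (cos t) <= 1.
Proof. pose proof (COS_bound t). apply Rabs_le; lra. Qed.

Lemma P_bound d l t x : Rabs x <= 1 -> Rabs (pL d l (x * cos t)) <= Lam d l * Rabs x.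
Proof. intros H. pose proof (abs_cos_mul x t). eapply Rle_trans. apply pL_bound; lra.
  apply Rmult_le_compat_l; auto. apply Lam_pos. Qed.

Lemma den_bound d l t x : Rabs x <= 1 -> Lam d l * Rabs x <= 1/2 -> Rabs (denL d l t x) >= 1/2.
Proof. intros H1 H2. unfold denL. pose proof (P_bound d l t x H1).
  assert (Rabs (sin t * cos t * pL d l (x * cos t)) <= 1/2).
  { rewrite !Rabs_mult. pose proof (abs_sin_le t). pose proof (abs_cos_le t).
    pose proof (Rabs_pos (sin t)). pose proof (Rabs_pos (cos t)). pose proof (Rabs_pos (pL d l (x * cos t))).
    assert (Rabs (sin t) * Rabs (cos t) <= 1) by nra. nra. }
  pose proof (Rabs_triang_inv (-1) (- (sin t * cos t * pL d l (x * cos t)))).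
  replace (-1 - - (sin t * cos t * pL d l (x * cos t))) with (-1 + sin t * cos t * pL d l (x * cos t)) in H3 by ring.
  rewrite Rabs_Ropp in H3. replace (Rabs (-1)) with 1 in H3 by (unfold Rabs; destruct Rcase_abs; lra). lra. Qed.

Definition cl (rho x : R) : R := Rmax (- rho) (Rmin rho x).

Lemma cl_bound rho x : 0 <= rho -> Rabs (cl rho x) <= rho.
Proof. intros H. unfold cl, Rmax, Rmin. repeat destruct Rle_dec; apply Rabs_le; lra. Qed.
Lemma cl_lip rho x y : 0 <= rho -> Rabs (cl rho x - cl rho y) <= Rabs (x - y).
Proof. intros H. unfold cl, Rmax, Rmin. repeat destruct Rle_dec; unfold Rabs; repeat destruct Rcase_abs; lra. Qed.
Lemma cl_id rho x : Rabs x <= rho -> cl rho x = x.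
Proof. intros H. apply Rabs_le_between in H. unfold cl, Rmax, Rmin. repeat destruct Rle_dec; lra. Qed.

Lemma quot_lip (Na Nb Da Db K1 K2 e : R) : Rabs Da >= 1/2 -> Rabs Db >= 1/2 -> Rabs Db <= 3/2 ->
  Rabs Nb <= 1/2 -> Rabs (Na - Nb) <= K1 * e -> Rabs (Da - Db) <= K2 * e ->
  Rabs (Na / Da - Nb / Db) <= 4 * (3/2 * K1 + 1/2 * K2) * e.
Proof. intros H1 H2 H3 H4 H5 H6.
  assert (Da <> 0) by (intro; subst; rewrite Rabs_R0 in H1; lra).
  assert (Db <> 0) by (intro; subst; rewrite Rabs_R0 in H2; lra).
  replace (Na / Da - Nb / Db) with (((Na - Nb) * Db + Nb * (Db - Da)) * (/ Da * / Db)) by (field; auto).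
  rewrite Rabs_mult. rewrite Rabs_mult, !Rabs_inv.
  assert (Hinv : / Rabs Da * / Rabs Db <= 4).
  { replace 4 with (/ (1/2) * / (1/2)) by field. apply Rmult_le_compat; try (left; apply Rinv_0_lt_compat; lra);
    apply Rinv_le_contravar; lra. }
  assert (Rabs ((Na - Nb) * Db + Nb * (Db - Da)) <= (3/2 * K1 + 1/2 * K2) * e).
  { eapply Rle_trans. apply Rabs_triang. rewrite !Rabs_mult. rewrite (Rabs_minus_sym Db Da).
    pose proof (Rabs_pos (Na - Nb)). pose proof (Rabs_pos Nb). pose proof (Rabs_pos (Da - Db)). nra. }
  pose proof (Rabs_pos ((Na - Nb) * Db + Nb * (Db - Da))).
  assert (0 <= / Rabs Da * / Rabs Db) by (apply Rmult_le_pos; left; apply Rinv_0_lt_compat; lra).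
  nra. Qed.

Section Sol.
Variables (d : nat) (l : nat -> R) (rho : R).
Hypothesis Hrho : 0 <= rho <= 1.
Hypothesis HLr : Lam d l * rho <= 1/2.

Definition Gf (t x : R) : R := rhsL d l t (cl rho x).

Lemma den_ok t a : Rabs a <= rho -> Rabs (denL d l t a) >= 1/2.
Proof. intros H. apply den_bound. lra. pose proof (Lam_pos d l). nra. Qed.

Lemma den_le t a : Rabs a <= rho -> Rabs (denL d l t a) <= 3/2.
Proof. intros H. unfold denL. pose proof (P_bound d l t a ltac:(lra)). pose proof (Lam_pos d l).
  eapply Rle_trans. apply Rabs_triang. replace (Rabs (-1)) with 1 by (unfold Rabs; destruct Rcase_abs; lra).
  rewrite !Rabs_mult. pose proof (abs_sin_le t). pose proof (abs_cos_le t).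
  pose proof (Rabs_pos (sin t)). pose proof (Rabs_pos (cos t)). pose proof (Rabs_pos (pL d l (a * cos t))).
  assert (Rabs (sin t) * Rabs (cos t) <= 1) by nra. assert (Lam d l * Rabs a <= 1/2) by nra. nra. Qed.

Lemma N_bound t a : Rabs a <= rho -> Rabs (a * pL d l (a * cos t) * sin t ^ 2) <= Lam d l * rho ^ 2.
Proof. intros H. rewrite !Rabs_mult. pose proof (P_bound d l t a ltac:(lra)).
  assert (Rabs (sin t ^ 2) <= 1) by (rewrite <- RPow_abs; apply pow_le1; split; [apply Rabs_pos|apply abs_sin_le]).
  pose proof (Rabs_pos a). pose proof (Rabs_pos (pL d l (a * cos t))). pose proof (Rabs_pos (sin t ^ 2)).
  pose proof (Lam_pos d l). replace (rho ^ 2) with (rho * rho) by ring.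
  assert (E1 : Rabs a * Rabs (pL d l (a * cos t)) <= Rabs a * (Lam d l * Rabs a)) by (apply Rmult_le_compat_l; auto).
  assert (E2 : Rabs a * (Lam d l * Rabs a) <= Lam d l * (rho * rho)).
  { replace (Rabs a * (Lam d l * Rabs a)) with (Lam d l * (Rabs a * Rabs a)) by ring.
    apply Rmult_le_compat_l; auto. apply Rmult_le_compat; auto. }
  assert (E3 : 0 <= Rabs a * Rabs (pL d l (a * cos t))) by (apply Rmult_le_pos; auto).
  apply Rle_trans with (Rabs a * Rabs (pL d l (a * cos t)) * 1). apply Rmult_le_compat_l; auto. lra. Qed.

Lemma Gf_bound t x : Rabs (Gf t x) <= 2 * Lam d l * rho ^ 2.
Proof. unfold Gf, rhsL. pose proof (cl_bound rho x ltac:(lra)) as Hc. set (a := cl rho x) in *.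
  pose proof (den_ok t a Hc). pose proof (N_bound t a Hc).
  assert (denL d l t a <> 0) by (intro E; rewrite E, Rabs_R0 in H; lra).
  unfold Rdiv. rewrite Rabs_mult, Rabs_inv.
  assert (/ Rabs (denL d l t a) <= 2) by (replace 2 with (/ (1/2)) by field; apply Rinv_le_contravar; lra).
  pose proof (Rabs_pos (a * pL d l (a * cos t) * sin t ^ 2)).
  assert (0 <= / Rabs (denL d l t a)) by (left; apply Rinv_0_lt_compat; lra). nra. Qed.

Definition Lc : R := 4 * (3/2 * (1/2 + Lam' d l) + 1/2 * Lam' d l).

Lemma Gf_lip t x y : Rabs (Gf t x - Gf t y) <= Lc * Rabs (x - y).
Proof. unfold Gf, rhsL. pose proof (cl_bound rho x ltac:(lra)) as Ha. pose proof (cl_bound rho y ltac:(lra)) as Hb.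
  pose proof (cl_lip rho x y ltac:(lra)) as He.
  set (a := cl rho x) in *. set (b := cl rho y) in *.
  pose proof (Lam'_pos d l) as HL'. pose proof (Lam_pos d l) as HL.
  assert (HP : Rabs (pL d l (a * cos t) - pL d l (b * cos t)) <= Lam' d l * Rabs (a - b)).
  { eapply Rle_trans. apply pL_lip. pose proof (abs_cos_mul a t); lra. pose proof (abs_cos_mul b t); lra.
    apply Rmult_le_compat_l; auto. replace (a * cos t - b * cos t) with ((a - b) * cos t) by ring. apply abs_cos_mul. }
  eapply Rle_trans. apply (quot_lip _ _ _ _ (1/2 + Lam' d l) (Lam' d l) (Rabs (a - b))).
  - apply den_ok; auto.
  - apply den_ok; auto.
  - apply den_le; auto.
  - pose proof (N_bound t b Hb). assert (Lam d l * rho ^ 2 <= 1/2). simpl. nra. lra.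
  - replace (a * pL d l (a * cos t) * sin t ^ 2 - b * pL d l (b * cos t) * sin t ^ 2) with
      (((a - b) * pL d l (a * cos t) + b * (pL d l (a * cos t) - pL d l (b * cos t))) * sin t ^ 2) by ring.
    rewrite Rabs_mult.
    assert (Rabs (sin t ^ 2) <= 1) by (rewrite <- RPow_abs; apply pow_le1; split; [apply Rabs_pos|apply abs_sin_le]).
    assert (Rabs ((a - b) * pL d l (a * cos t) + b * (pL d l (a * cos t) - pL d l (b * cos t))) <= (1/2 + Lam' d l) * Rabs (a - b)).
    { eapply Rle_trans. apply Rabs_triang. rewrite !Rabs_mult.
      pose proof (P_bound d l t a ltac:(lra)). pose proof (Rabs_pos (a - b)). pose proof (Rabs_pos b).
      pose proof (Rabs_pos (pL d l (a * cos t))). pose proof (Rabs_pos (pL d l (a * cos t) - pL d l (b * cos t))).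
      assert (Rabs (pL d l (a * cos t)) <= 1/2) by nra. nra. }
    pose proof (Rabs_pos (sin t ^ 2)). pose proof (Rabs_pos (a - b)).
    pose proof (Rabs_pos ((a - b) * pL d l (a * cos t) + b * (pL d l (a * cos t) - pL d l (b * cos t)))). nra.
  - unfold denL. replace (-1 + sin t * cos t * pL d l (a * cos t) - (-1 + sin t * cos t * pL d l (b * cos t))) with
      (sin t * cos t * (pL d l (a * cos t) - pL d l (b * cos t))) by ring.
    rewrite !Rabs_mult. pose proof (abs_sin_le t). pose proof (abs_cos_le t).
    pose proof (Rabs_pos (sin t)). pose proof (Rabs_pos (cos t)). pose proof (Rabs_pos (pL d l (a * cos t) - pL d l (b * cos t))).
    assert (Rabs (sin t) * Rabs (cos t) <= 1) by nra. nra.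
  - unfold Lc. apply Rmult_le_compat_l; auto. nra.
Qed.

Lemma Gf_cont x t : continuous (fun s => Gf s x) t.
Proof. unfold Gf, rhsL. set (a := cl rho x). pose proof (cl_bound rho x ltac:(lra)) as Ha. fold a in Ha.
  apply cont_pt. apply continuity_pt_div.
  - apply cont_pt'. apply cont_mult. apply cont_mult. apply cont_const. apply (pL_cont d l a t). apply cont_pow, cont_sin.
  - apply cont_pt'. unfold denL. apply (cont_plus (fun _ => -1)). apply cont_const. apply cont_mult.
    apply cont_mult; [apply cont_sin|apply cont_cos]. apply (pL_cont d l a t).
  - intro E. pose proof (den_ok t a Ha). rewrite E, Rabs_R0 in H. lra.
Qed.

End Sol.

Lemma seg_abs (th t : R) : Rmin 0 th <= t <= Rmax 0 th -> Rabs t <= Rabs th.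
Proof. intros [H1 H2]. unfold Rmin, Rmax in *. destruct Rle_dec; unfold Rabs; repeat destruct Rcase_abs; lra. Qed.

Lemma sol_exists d l th : exists eps, 0 < eps /\ forall r0, 0 < r0 < eps -> exists r : R -> R,
  is_polar_sol d l r0 th r /\ forall t, Rmin 0 th <= t <= Rmax 0 th -> r0 / 2 <= r t <= 3 * r0 / 2.
Proof. pose proof (Lam_pos d l) as HL. pose proof (Rabs_pos th) as Hth.
  set (eps := / (16 * (Lam d l + 1) * (Rabs th + 1))).
  assert (Heps : 0 < eps) by (unfold eps; apply Rinv_0_lt_compat; nra).
  exists eps; split; auto. intros r0 [Hr0 Hr0e].
  assert (Hk : 16 * (Lam d l + 1) * (Rabs th + 1) * r0 < 1).
  { apply Rmult_lt_compat_l with (r := 16 * (Lam d l + 1) * (Rabs th + 1)) in Hr0e; [|nra].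
    unfold eps in Hr0e. rewrite Rinv_r in Hr0e by nra. lra. }
  assert (Hk2 : (Lam d l + 1) * r0 <= (Lam d l + 1) * (Rabs th + 1) * r0).
  { assert (0 <= (Lam d l + 1) * r0) by nra. nra. }
  assert (Hk3 : r0 <= (Lam d l + 1) * r0) by nra.
  set (rho := 2 * r0).
  assert (Hrho : 0 <= rho <= 1) by (unfold rho; split; lra).
  assert (HLr : Lam d l * rho <= 1/2) by (unfold rho; lra).
  destruct (picard (Gf d l rho) (2 * Lam d l * rho ^ 2) (Lc d l) r0) as [y [Hy0 [Hyd Hyb]]].
  - intros; apply Gf_bound; auto.
  - intros; apply Gf_lip; auto.
  - intros; apply Gf_cont; auto.
  - assert (Hclose : forall t, Rmin 0 th <= t <= Rmax 0 th -> Rabs (y t - r0) <= r0 / 2).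
    { intros t Ht. eapply Rle_trans. apply Hyb. pose proof (seg_abs th t Ht).
      unfold rho. replace (2 * Lam d l * (2 * r0) ^ 2 * Rabs t) with (8 * Lam d l * r0 * r0 * Rabs t) by ring.
      assert (8 * Lam d l * r0 * Rabs t <= 1/2).
      { assert (Lam d l * Rabs t <= (Lam d l + 1) * (Rabs th + 1)) by nra. nra. }
      nra. }
    exists y. split.
    + split; auto. intros t Ht. pose proof (Hclose t Ht) as Hc. apply Rabs_le_between in Hc.
      assert (Hyt : Rabs (y t) <= rho) by (unfold rho; apply Rabs_le; lra).
      split.
      * intro E. pose proof (den_ok d l rho Hrho HLr t (y t) Hyt). rewrite E, Rabs_R0 in H. lra.
      * specialize (Hyd t). unfold Gf in Hyd. rewrite cl_id in Hyd by auto. exact Hyd.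
    + intros t Ht. pose proof (Hclose t Ht) as Hc. apply Rabs_le_between in Hc. lra.
Qed.

Lemma sumf_1 (f : nat -> R) d : sum_f_R0 f d = f 0%nat + sum_n_m f 1 d.
Proof. induction d. simpl. rewrite sum10; ring. rewrite tech5, sum1S, IHd. ring. Qed.

Lemma sumf_ext_zero (f : nat -> R) n m : (n <= m)%nat -> (forall j, (n < j <= m)%nat -> f j = 0) ->
  sum_f_R0 f m = sum_f_R0 f n.
Proof. intros H. induction H; intros Hz. reflexivity. rewrite tech5, IHle. rewrite (Hz (S m)) by lia. ring. intros; apply Hz; lia. Qed.

Lemma sumf_zero (f : nat -> R) n : (forall j, (j <= n)%nat -> f j = 0) -> sum_f_R0 f n = 0.
Proof. intros H. induction n. simpl; apply H; lia. rewrite tech5, IHn. rewrite (H (S n)) by lia. ring. intros; apply H; lia. Qed.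

Lemma cont_sumf (G : nat -> R -> R) n (t : R) : (forall p, (p <= n)%nat -> continuous (G p) t) ->
  continuous (fun x => sum_f_R0 (fun p => G p x) n) t.
Proof. intros H. induction n. simpl. apply H; lia.
  apply (cont_ext (fun x => sum_f_R0 (fun p => G p x) n + G (S n) x)). intros; rewrite tech5; reflexivity.
  apply (cont_plus (fun x => sum_f_R0 (fun p => G p x) n)). apply IHn; intros; apply H; lia. apply H; lia. Qed.

Lemma deriv_sumf (F F' : nat -> R -> R) n (t : R) : (forall k, (k <= n)%nat -> is_derive (F k) t (F' k t)) ->
  is_derive (fun x => sum_f_R0 (fun k => F k x) n) t (sum_f_R0 (fun k => F' k t) n).
Proof. intros H. induction n. simpl. apply H; lia.
  apply (dR_ext (fun x => sum_f_R0 (fun k => F k x) n + F (S n) x)). intros; rewrite tech5; reflexivity.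
  rewrite tech5. apply dR_plus. apply IHn; intros; apply H; lia. apply H; lia. Qed.

Section FI.
Variables (d : nat) (l : nat -> R) (N : nat).
Hypothesis Hl : valid_params d l.
Hypothesis Hd : (1 <= d)%nat.
Hypothesis HN : (2 <= N)%nat.

Definition Phi (t x : R) := sum_f_R0 (fun k => U l k t * x ^ k) N.
Definition Aser (t x : R) := sum_f_R0 (fun k => A l k t * x ^ k) N.
Definition Bser (t x : R) := sum_f_R0 (fun k => INR k * U l k t * x ^ (pred k)) N.
Definition be (t : R) (j : nat) := if Nat.leb j N then Sig l t j else 0.
Definition cc (t : R) (k : nat) := sum_f_R0 (fun p => pi_ l t p * be t (k - p)) k.
Definition MM := (N + d)%nat.

Lemma Phi0 x : Phi 0 x = x.
Proof. unfold Phi. assert (forall n, (1 <= n)%nat -> sum_f_R0 (fun k => U l k 0 * x ^ k) n = x).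
  { intros n Hn. induction Hn. simpl. rewrite U_0, U_1. ring.
    rewrite tech5, IHHn, U_at0 by lia. ring. }
  apply H; lia. Qed.

Lemma Phi_deriv (r : R -> R) t r' : is_derive r t r' ->
  is_derive (fun t => Phi t (r t)) t (Aser t (r t) + Bser t (r t) * r').
Proof. intros Hr. unfold Phi, Aser, Bser. rewrite (Rmult_comm (sum_f_R0 _ N) r'), scal_sum, <- sum_plus.
  apply (deriv_sumf (fun k x => U l k x * r x ^ k) (fun k x => A l k x * r x ^ k + INR k * U l k x * r x ^ pred k * r')).
  intros k _. eapply dR_eq; [|apply dR_mult; [eapply U_deriv; eauto| apply is_derive_pow; exact Hr]].
  cbv beta; ring. Qed.

Lemma P_expand t x : pL d l (x * cos t) = sum_f_R0 (fun p => pi_ l t p * x ^ p) MM.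
Proof. unfold MM. rewrite (sumf_ext_zero _ d) by (try lia; intros j Hj; unfold pi_; rewrite Hl by lia; ring).
  rewrite sumf_1. unfold pi_ at 1. rewrite (Hl 0%nat) by auto. rewrite !Rmult_0_l, Rplus_0_l.
  unfold pL. apply sumR_ext_loc. intros; unfold pi_; rewrite Rpow_mult_distr; ring. Qed.

Lemma S_expand t x : sin t * cos t * Aser t x + sin t ^ 2 * x * Bser t x = sum_f_R0 (fun j => be t j * x ^ j) MM.
Proof. unfold MM. rewrite (sumf_ext_zero _ N) by (first [lia | intros j Hj; unfold be; destruct (Nat.leb_spec j N); [lia|ring]]).
  rewrite (sum_eq _ (fun j => Sig l t j * x ^ j)) by (intros i Hi; unfold be; destruct (Nat.leb_spec i N); [reflexivity|lia]).
  unfold Aser, Bser. clear HN. induction N as [|n IH].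
  - simpl. unfold Sig. simpl. ring.
  - rewrite !tech5. rewrite <- IH. unfold Sig. simpl pred. simpl pow. ring.
Qed.

Lemma cauchy_M t x : sum_f_R0 (fun p => pi_ l t p * x ^ p) MM * sum_f_R0 (fun j => be t j * x ^ j) MM =
  sum_f_R0 (fun k => cc t k * x ^ k) MM.
Proof. rewrite cauchy_finite by (unfold MM; lia).
  match goal with |- _ + ?Z = _ => assert (HZ : Z = 0); [|rewrite HZ] end.
  2:{ rewrite Rplus_0_r. apply sum_eq. intros k Hk. unfold cc. rewrite Rmult_comm, scal_sum. apply sum_eq. intros p Hp.
    replace (x ^ k) with (x ^ p * x ^ (k - p)) by (rewrite <- pow_add; f_equal; lia). ring. }
  apply sumf_zero. intros k Hk. apply sumf_zero. intros p Hp.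
    destruct (le_lt_dec (S (p + k)) d).
  + unfold be. destruct (Nat.leb_spec (MM - p) N). unfold MM in *; lia. ring.
  + unfold pi_. rewrite Hl by lia. ring.
Qed.

Lemma cc_low t k : (k <= N)%nat -> cc t k = A l k t.
Proof. intros Hk. unfold cc. rewrite sumf_1. unfold pi_ at 1. rewrite Hl by auto.
  rewrite A_rec. replace (0 * cos t ^ 0 * be t (k - 0)) with 0 by ring. rewrite Rplus_0_l.
  apply sumR_ext_loc. intros p Hp. unfold be. destruct (Nat.leb_spec (k - p) N); [reflexivity|lia]. Qed.

Lemma E_identity t x :
  Aser t x * denL d l t x + Bser t x * (x * pL d l (x * cos t) * sin t ^ 2) =
  sum_f_R0 (fun k => cc t (S N + k) * x ^ (S N + k)) (MM - S N).
Proof. unfold denL.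
  replace (Aser t x * (-1 + sin t * cos t * pL d l (x * cos t)) + Bser t x * (x * pL d l (x * cos t) * sin t ^ 2))
    with (- Aser t x + pL d l (x * cos t) * (sin t * cos t * Aser t x + sin t ^ 2 * x * Bser t x)) by ring.
  rewrite S_expand, P_expand, cauchy_M. rewrite (tech2 _ N MM) by (unfold MM; lia).
  unfold Aser. rewrite (sum_eq (fun k => cc t k * x ^ k) (fun k => A l k t * x ^ k)) by (intros; rewrite cc_low; auto).
  ring. Qed.

Lemma E_bound t x : Rabs x <= 1 ->
  Rabs (sum_f_R0 (fun k => cc t (S N + k) * x ^ (S N + k)) (MM - S N)) <=
  Rabs x ^ (S N) * sum_f_R0 (fun k => Rabs (cc t (S N + k))) (MM - S N).
Proof. intros Hx. eapply Rle_trans. apply Rsum_abs. rewrite scal_sum. apply sum_Rle. intros k _.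
  rewrite Rabs_mult, <- RPow_abs, pow_add. pose proof (Rabs_pos (cc t (S N + k))).
  pose proof (pow_le1 (Rabs x) k ltac:(split; auto; apply Rabs_pos)). pose proof (pow_le (Rabs x) (S N) (Rabs_pos x)).
  pose proof (pow_le (Rabs x) k (Rabs_pos x)).
  assert (Rabs x ^ S N * Rabs x ^ k <= Rabs x ^ S N) by nra. nra. Qed.

Lemma cc_cont k t : continuous (fun t => cc t k) t.
Proof. unfold cc. apply (cont_sumf (fun p t => pi_ l t p * be t (k - p))). intros p _.
  apply cont_mult. unfold pi_. apply cont_mult. apply cont_const. apply cont_pow, cont_cos.
  unfold be. destruct (Nat.leb (k - p) N). unfold Sig.
  apply (cont_plus (fun t => sin t * cos t * A l (k - p) t)). apply cont_mult. apply cont_mult; [apply cont_sin|apply cont_cos].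
  eapply A_cont; eauto. apply cont_mult. apply cont_mult. apply cont_pow, cont_sin. apply cont_const. eapply U_cont; eauto.
  apply cont_const. Qed.

Lemma g_cont t : continuity_pt (fun t => sum_f_R0 (fun k => Rabs (cc t (S N + k))) (MM - S N)) t.
Proof. apply cont_pt'. apply (cont_sumf (fun k t => Rabs (cc t (S N + k)))). intros p _.
  apply (cont_comp (fun t => cc t (S N + p)) Rabs). apply cc_cont. apply cont_pt, Rcontinuity_abs. Qed.

Lemma phi_bound th : exists C eps0, 0 < eps0 /\ forall r0 (r : R -> R), 0 < r0 < eps0 ->
  is_polar_sol d l r0 th r -> (forall t, Rmin 0 th <= t <= Rmax 0 th -> r0 / 2 <= r t <= 3 * r0 / 2) ->
  Rabs (Phi th (r th) - r0) <= C * r0 ^ (S N).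
Proof.
  set (g := fun t => sum_f_R0 (fun k => Rabs (cc t (S N + k))) (MM - S N)).
  destruct (continuity_ab_maj g (- Rabs th) (Rabs th)) as [Mx [HMx _]].
  { pose proof (Rabs_pos th); lra. } { intros; apply g_cont. }
  set (K := g Mx).
  assert (HK : 0 <= K). { unfold K, g. apply cond_pos_sum. intros; apply Rabs_pos. }
  pose proof (Lam_pos d l) as HL.
  exists (2 * K * Rabs th * (3/2) ^ (S N)), (/ (3 * (Lam d l + 1))). split.
  { apply Rinv_0_lt_compat; lra. }
  intros r0 r [Hr0 Hr0e] [Hrz Hsol] Hb.
  assert (Hr0s : 3 * (Lam d l + 1) * r0 < 1).
  { apply Rmult_lt_compat_l with (r := 3 * (Lam d l + 1)) in Hr0e; [|lra]. rewrite Rinv_r in Hr0e by lra. lra. }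
  assert (Hsmall : forall t, Rmin 0 th <= t <= Rmax 0 th -> Rabs (r t) <= 1 /\ Lam d l * Rabs (r t) <= 1/2 /\ Rabs (r t) <= 3 * r0 / 2).
  { intros t Ht. specialize (Hb t Ht). rewrite Rabs_right by lra. split; [|split]; nra. }
  set (h := fun t => Phi t (r t)).
  assert (Hh : forall t, Rmin 0 th <= t <= Rmax 0 th ->
     is_derive h t ((sum_f_R0 (fun k => cc t (S N + k) * r t ^ (S N + k)) (MM - S N)) / denL d l t (r t))).
  { intros t Ht. destruct (Hsol t Ht) as [Hden Hder]. eapply dR_eq; [|apply Phi_deriv; exact Hder].
    rewrite <- E_identity. unfold rhsL. field. auto. }
  destruct (MVT_gen h 0 th (fun t => (sum_f_R0 (fun k => cc t (S N + k) * r t ^ (S N + k)) (MM - S N)) / denL d l t (r t)))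
    as [c [Hc Hmvt]].
  { intros x Hx; apply Hh; lra. } { intros x Hx. eapply deriv_cont_pt. apply Hh; auto. }
  unfold h in Hmvt. rewrite Phi0, Hrz in Hmvt. rewrite Hmvt.
  destruct (Hsmall c Hc) as [H1 [H2 H3]]. pose proof (den_bound d l c (r c) H1 H2) as HD.
  pose proof (E_bound c (r c) H1) as HE.
  assert (Hg : g c <= K). { apply HMx. pose proof (seg_abs th c Hc). apply Rabs_le_between in H. lra. }
  rewrite Rabs_mult. unfold Rdiv. rewrite Rabs_mult, Rabs_inv. rewrite Rminus_0_r.
  assert (HiD : / Rabs (denL d l c (r c)) <= 2) by (replace 2 with (/ (1/2)) by field; apply Rinv_le_contravar; lra).
  assert (Hpow : Rabs (r c) ^ S N <= (3/2) ^ S N * r0 ^ S N).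
  { rewrite <- Rpow_mult_distr. apply pow_incr. split. apply Rabs_pos. lra. }
  set (E := sum_f_R0 (fun k => cc c (S N + k) * r c ^ (S N + k)) (MM - S N)) in *.
  fold (g c) in HE.
  assert (HE2 : Rabs E <= (3/2) ^ S N * r0 ^ S N * K).
  { eapply Rle_trans. apply HE. apply Rmult_le_compat; auto. apply pow_le, Rabs_pos. unfold g. apply cond_pos_sum. intros; apply Rabs_pos. }
  pose proof (Rabs_pos E). pose proof (Rabs_pos th).
  assert (0 <= / Rabs (denL d l c (r c))) by (left; apply Rinv_0_lt_compat; lra).
  assert (Rabs E * / Rabs (denL d l c (r c)) <= (3/2) ^ S N * r0 ^ S N * K * 2).
  { apply Rmult_le_compat; auto. }
  pose proof (pow_le (3/2) (S N) ltac:(lra)). pose proof (pow_le r0 (S N) ltac:(lra)).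
  apply Rle_trans with ((3/2) ^ S N * r0 ^ S N * K * 2 * Rabs th).
  apply Rmult_le_compat_r; auto. apply Req_le; unfold Rdiv; ring.
Qed.

End FI.

Lemma geo_partial q n : 0 <= q <= 1/2 -> sum_f_R0 (fun i => q ^ i) n <= 2 - q ^ n.
Proof. intros Hq. induction n. simpl; lra. rewrite tech5. simpl pow. pose proof (pow_le q n ltac:(lra)). nra. Qed.

Lemma tail_bound (a : nat -> R) Sv m c q : infinite_sum a Sv -> 0 <= q <= 1/2 -> 0 <= c ->
  (forall i, Rabs (a (S m + i)%nat) <= c * q ^ i) -> Rabs (Sv - sum_f_R0 a m) <= 2 * c.
Proof. intros Hs Hq Hc Hb. apply Rle_plus_epsilon. intros eps Heps.
  destruct (Hs eps Heps) as [N0 HN0]. set (n := max N0 (S m)).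
  specialize (HN0 n (Nat.le_max_l _ _)). unfold R_dist in HN0.
  rewrite (tech2 a m n) in HN0 by (unfold n; lia).
  set (T := sum_f_R0 (fun i => a (S m + i)%nat) (n - S m)) in *.
  assert (HT : Rabs T <= 2 * c).
  { unfold T. eapply Rle_trans. apply Rsum_abs. eapply Rle_trans. apply (sum_Rle _ (fun i => c * q ^ i)). intros; apply Hb.
    replace (sum_f_R0 (fun i => c * q ^ i) (n - S m)) with (c * sum_f_R0 (fun i => q ^ i) (n - S m)) by (rewrite scal_sum; apply sum_eq; intros; ring).
    pose proof (geo_partial q (n - S m) Hq). pose proof (pow_le q (n - S m) ltac:(lra)). nra. }
  replace (Sv - sum_f_R0 a m) with (- (sum_f_R0 a m + T - Sv) + T) by ring.
  eapply Rle_trans. apply Rabs_triang. rewrite Rabs_Ropp. lra. Qed.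

Lemma sumf_diff_last (f g : nat -> R) m : (forall k, (k < m)%nat -> f k = g k) ->
  sum_f_R0 f m = sum_f_R0 g m + (f m - g m).
Proof. intros H. destruct m. simpl; ring. rewrite !tech5. rewrite (sum_eq f g) by (intros; apply H; lia). ring. Qed.

Lemma terms_bounded (b : nat -> R) Sv : infinite_sum b Sv -> exists Bd, 0 <= Bd /\ forall n, Rabs (b n) <= Bd.
Proof. intros H. assert (Hl : is_lim_seq b 0). { apply ex_series_lim_0. exists Sv. apply is_series_Reals; auto. }
  apply is_lim_seq_Reals in Hl. destruct (cv_bounded b Hl) as [C HC]. exists C. split; auto.
  eapply Rle_trans; [apply Rabs_pos|apply (HC 0%nat)]. Qed.

Lemma zero_from_lin Z K eps : 0 < eps -> 0 <= Z -> 0 <= K -> (forall r0, 0 < r0 < eps -> Z <= K * r0) -> Z = 0.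
Proof. intros He HZ HK H. cut (Z <= 0). lra. apply Rle_plus_epsilon. intros e Hee.
  set (r0 := Rmin (eps / 2) (e / (K + 1))).
  assert (0 < r0) by (unfold r0; apply Rmin_glb_lt; apply Rdiv_lt_0_compat; lra).
  assert (r0 <= eps / 2) by apply Rmin_l. assert (r0 <= e / (K + 1)) by apply Rmin_r.
  pose proof (H r0 ltac:(lra)).
  assert (K * r0 <= (K + 1) * (e / (K + 1))) by nra.
  replace ((K + 1) * (e / (K + 1))) with e in H4 by (field; lra). lra. Qed.

Theorem v_eq_U (d : nat) (hd : (1 <= d)%nat) (v : nat -> R -> (nat -> R) -> R) (hv : inverse_expansion d v)
  (l : nat -> R) (Hl : valid_params d l) (th : R) : forall N, (2 <= N)%nat -> v N th l = U l N th.
Proof.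
  intros N. induction N as [N IH] using lt_wf_ind. intros HN.
  destruct (hv l Hl th) as [delta [Hdelta Hser]].
  destruct (sol_exists d l th) as [e1 [He1 Hsol]].
  destruct (phi_bound d l N Hl hd HN th) as [C [e0 [He0 Hphi]]].
  set (eps := Rmin delta (Rmin e1 e0)).
  assert (Heps : 0 < eps) by (unfold eps; repeat apply Rmin_glb_lt; auto).
  assert (Hed : eps <= delta) by apply Rmin_l.
  assert (He1' : eps <= e1) by (eapply Rle_trans; [apply Rmin_r|apply Rmin_l]).
  assert (He0' : eps <= e0) by (eapply Rle_trans; [apply Rmin_r|apply Rmin_r]).
  destruct (Hsol (eps / 2) ltac:(lra)) as [r1 [Hr1 Hb1]].
  assert (Hth : Rmin 0 th <= th <= Rmax 0 th) by (unfold Rmin, Rmax; destruct Rle_dec; lra).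
  set (rho1 := r1 th). pose proof (Hb1 th Hth) as Hrho1. fold rho1 in Hrho1.
  pose proof (Hser (eps / 2) r1 ltac:(rewrite Rabs_right; lra) Hr1) as Hs1.
  apply is_series_Reals in Hs1.
  destruct (terms_bounded _ _ Hs1) as [Bd [HBd0 HBd]].
  set (K := C * 2 ^ (S N) + 2 * Bd / rho1 ^ (S N)).
  assert (HC0 : 0 <= C).
  {
    pose proof (Hphi (eps / 2) r1 ltac:(lra) Hr1 Hb1) as Hp. pose proof (Rabs_pos (Phi l N th (r1 th) - eps / 2)).
    pose proof (pow_lt (eps / 2) (S N) ltac:(lra)).
    destruct (Rle_dec 0 C); auto. nra. }
  assert (Hrho1p : 0 < rho1) by lra.
  assert (HK : 0 <= K).
  { unfold K. apply Rplus_le_le_0_compat. apply Rmult_le_pos; auto. apply pow_le; lra.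
    apply Rdiv_le_0_compat. lra. apply pow_lt; auto. }
  apply Rminus_diag_uniq. apply Rabs_eq_0.
  apply (zero_from_lin _ (3 / 2 * K) (Rmin eps (rho1 / 3))).
  { apply Rmin_glb_lt; lra. } apply Rabs_pos. lra.
  intros r0 [Hr0 Hr0e].
  assert (Hr0a : r0 < eps) by (eapply Rlt_le_trans; [exact Hr0e|apply Rmin_l]).
  assert (Hr0b : r0 <= rho1 / 3) by (left; eapply Rlt_le_trans; [exact Hr0e|apply Rmin_r]).
  destruct (Hsol r0 ltac:(lra)) as [r [Hr Hb]].
  set (rho := r th). pose proof (Hb th Hth) as Hrho. fold rho in Hrho.
  pose proof (Hser r0 r ltac:(rewrite Rabs_right; lra) Hr) as Hs. apply is_series_Reals in Hs.
  fold rho in Hs.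
  pose proof (Hphi r0 r ltac:(lra) Hr Hb) as Hp. fold rho in Hp.
  set (q := rho / rho1).
  assert (Hq : 0 <= q <= 1/2) by (unfold q; split; [apply Rdiv_le_0_compat; lra|]; apply Rmult_le_reg_r with rho1; auto;
    unfold Rdiv; rewrite Rmult_assoc, Rinv_l, Rmult_1_r; lra).
  set (a := fun n => v (n + 2)%nat th l * rho ^ (n + 2)).
  assert (Htail : Rabs ((r0 - rho) - sum_f_R0 a (N - 2)) <= 2 * (Bd * q ^ (S N))).
  { apply (tail_bound a _ _ _ q); auto. apply Rmult_le_pos; auto; apply pow_le; lra.
    intros i. unfold a. replace (S (N - 2) + i + 2)%nat with (S N + i)%nat by lia.
    specialize (HBd (S (N - 2) + i)%nat). replace (S (N - 2) + i + 2)%nat with (S N + i)%nat in HBd by lia.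
    replace (rho ^ (S N + i)) with (rho1 ^ (S N + i) * q ^ (S N + i)).
    2:{ unfold q. rewrite <- Rpow_mult_distr. f_equal. field. lra. }
    rewrite <- Rmult_assoc, Rabs_mult, (Rabs_right (q ^ _)) by (apply Rle_ge, pow_le; lra).
    rewrite (pow_add q (S N) i). pose proof (pow_le q (S N) ltac:(lra)). pose proof (pow_le q i ltac:(lra)).
    pose proof (Rabs_pos (v (S N + i)%nat th l * rho1 ^ (S N + i))).
    replace (Bd * q ^ S N * q ^ i) with (Bd * (q ^ S N * q ^ i)) by ring.
    apply Rmult_le_compat_r; auto. apply Rmult_le_pos; auto. }
  assert (Hpart : sum_f_R0 a (N - 2) = (Phi l N th rho - rho) + (v N th l - U l N th) * rho ^ N).
  { rewrite (sumf_diff_last a (fun n => U l (n + 2) th * rho ^ (n + 2))).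
    - unfold a. replace (N - 2 + 2)%nat with N by lia.
      unfold Phi. rewrite (tech2 _ 1 N) by lia. simpl (sum_f_R0 _ 1). rewrite U_0, U_1.
      replace (N - 2)%nat with (N - S 1)%nat by lia.
      rewrite (sum_eq (fun n => U l (n + 2) th * rho ^ (n + 2)) (fun i => U l (S 1 + i) th * rho ^ (S 1 + i))).
      ring. intros i _. replace (i + 2)%nat with (S 1 + i)%nat by lia. reflexivity.
    - intros k Hk. unfold a. rewrite IH by lia. reflexivity. }
  assert (Hkey : Rabs ((v N th l - U l N th) * rho ^ N) <= C * r0 ^ S N + 2 * (Bd * q ^ S N)).
  { replace ((v N th l - U l N th) * rho ^ N) with (- (Phi l N th rho - r0) - ((r0 - rho) - sum_f_R0 a (N - 2)))
      by (rewrite Hpart; ring).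
    eapply Rle_trans. apply Rabs_triang. rewrite Rabs_Ropp, Rabs_Ropp. lra. }
  rewrite Rabs_mult, (Rabs_right (rho ^ N)) in Hkey by (apply Rle_ge, pow_le; lra).
  assert (Hrhop : 0 < rho) by lra.
  assert (HrN : 0 < rho ^ N) by (apply pow_lt; auto).
  assert (Hbound : C * r0 ^ S N + 2 * (Bd * q ^ S N) <= K * rho ^ S N).
  { unfold K, q. rewrite Rmult_plus_distr_r. apply Rplus_le_compat.
    - rewrite Rmult_assoc, <- Rpow_mult_distr. apply Rmult_le_compat_l; auto. apply pow_incr; lra.
    - unfold Rdiv. rewrite Rpow_mult_distr, pow_inv. right. field. apply pow_nonzero; lra. }
  replace (rho ^ S N) with (rho * rho ^ N) in Hbound by reflexivity.
  assert (Rabs (v N th l - U l N th) <= K * rho).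
  { apply Rmult_le_reg_r with (rho ^ N); auto. replace (K * rho * rho ^ N) with (K * (rho * rho ^ N)) by ring. lra. }
  nra.
Qed.

Lemma div2_bounds a : (2 * (a / 2) <= a < 2 * (a / 2) + 2)%nat.
Proof. pose proof (Nat.div_mod_eq a 2). pose proof (Nat.mod_upper_bound a 2). lia. Qed.

Lemma U_sym_asin d l k : (2 <= k)%nat -> valid_params d l ->
  (forall i, (1 <= i < k)%nat -> Nat.even i = true -> l i = 0) ->
  forall t, U l k t = U l k (asin (sin t)).
Proof. intros Hk Hl Hev. destruct (sym_all d l k Hl Hev k (le_n k)) as [_ [H1 [_ H2]]].
  apply sym_asin; auto. Qed.

Lemma sum_n_zero (f : nat -> R) n : (forall j, f j = 0) -> sum_n f n = 0.
Proof. intros H. unfold sum_n. apply sum_zero_loc. intros; auto. Qed.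

Theorem main_alg (d : nat) (v : nat -> R -> (nat -> R) -> R) (k : nat) (hk : (2 <= k)%nat)
  (Hvu : forall l theta, valid_params d l -> v k theta l = U l k theta) :
  let k0 := ((k - 1) / 2)%nat in
  let k1 := ((k - 2) / 2)%nat in
  exists (f : R -> (nat -> R) -> R) (w : nat -> R -> (nat -> R) -> R),
    (forall theta, in_even_ideal d k0 (f theta)) /\
    (forall j s, (j <= k1)%nat -> is_poly_in d (w j s)) /\
    (forall j l, (j <= k1)%nat -> valid_params d l -> w j 0 l = 0) /\
    (forall theta l, valid_params d l ->
       v k theta l = f theta l
         + sum_n (fun j => l (2 * j + 1)%nat * w j (sin theta) l) k1).
Proof.
  intros k0 k1.
  pose proof (div2_bounds (k - 1)) as Hk0. pose proof (div2_bounds (k - 2)) as Hk1.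
  fold k0 in Hk0. fold k1 in Hk1.
  assert (HPL : forall t, PL d (fun l => U l k t)) by (intros; apply (PT_PL d (fun l t => U l k t)); apply PT_AU).
  set (Gs := fun s l => U (ZE k0 l) k (asin s)).
  assert (HG : forall s, PL d (Gs s)) by (intros s; apply (PL_ZE d (fun l => U l k (asin s))); auto).
  assert (HW : forall s, { W : nat -> (nat -> R) -> R | (forall j, PL d (W j)) /\ forall l, valid_params d l ->
     Gs s l = Gs s (ZO (S k1) l) + sum_n (fun j => l (2 * j + 1)%nat * W j l) k1 }).
  { intros s. apply constructive_indefinite_description. apply tele_O; auto. }
  exists (fun theta l => U l k theta - U (ZE k0 l) k theta).
  exists (fun j s l => if Req_EM_T s 0 then 0 else proj1_sig (HW s) j l).
  split; [|split; [|split]].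
  - intros theta. destruct (tele_E d _ k0 (HPL theta)) as [G [HG1 HG2]].
    exists G. split. intros i; apply PL_is_poly; auto. intros l Hl. rewrite (HG2 l Hl). ring.
  - intros j s _. destruct (Req_EM_T s 0). apply PL_is_poly, PL_zero.
    apply PL_is_poly. destruct (proj2_sig (HW s)) as [H _]. apply H.
  - intros j l _ _. destruct (Req_EM_T 0 0); [reflexivity|congruence].
  - intros theta l Hl. rewrite Hvu by auto.
    assert (Hl' : valid_params d (ZE k0 l)) by (apply valid_ZE; auto).
    assert (Hev : forall i, (1 <= i < k)%nat -> Nat.even i = true -> ZE k0 l i = 0).
    { intros i Hi He. apply Nat.even_spec in He as [m ->]. apply ZE_kill. lia. }
    rewrite (U_sym_asin d (ZE k0 l) k hk Hl' Hev theta).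
    destruct (Req_EM_T (sin theta) 0) as [E|E].
    + rewrite sum_n_zero by (intros; ring). rewrite E, asin_0, U_at0 by lia. ring.
    + destruct (proj2_sig (HW (sin theta))) as [_ H]. fold (Gs (sin theta) l). rewrite (H l Hl).
      assert (H0 : Gs (sin theta) (ZO (S k1) l) = 0).
      { unfold Gs. apply (AU_vanish _ k); [|lia|lia].
        intros i Hi. destruct (Nat.Even_or_Odd i) as [[m Hm]|[m Hm]]; subst i.
        - apply ZE_kill; lia.
        - rewrite ZE_keep by (intros; lia). apply ZO_kill. lia. }
      rewrite H0. ring.
Qed.


Theorem lemmaI1 (d : nat) (hd : (1 <= d)%nat)
  (v : nat -> R -> (nat -> R) -> R) (hv : inverse_expansion d v)
  (k : nat) (hk : (2 <= k)%nat) :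
  let k0 := ((k - 1) / 2)%nat in
  let k1 := ((k - 2) / 2)%nat in
  exists (f : R -> (nat -> R) -> R) (w : nat -> R -> (nat -> R) -> R),
    (forall theta, in_even_ideal d k0 (f theta)) /\
    (forall j s, (j <= k1)%nat -> is_poly_in d (w j s)) /\
    (forall j l, (j <= k1)%nat -> valid_params d l -> w j 0 l = 0) /\
    (forall theta l, valid_params d l ->
       v k theta l = f theta l
         + sum_n (fun j => l (2 * j + 1)%nat * w j (sin theta) l) k1).
Proof.
  apply (main_alg d v k hk).
  intros l theta Hl. apply (v_eq_U d hd v hv l Hl theta k hk).
Qed.
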